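(* For every $n\ge1$ and indices $i_1,\dots,i_n\in\{1,\dots,N\}$, setting $t=1$, $$\tilde\omega_{N,t=1}(\sigma_{i_1}\sigma_{i_2}\cdots\sigma_{i_n})=\omega_{N+1}(\sigma_{i_1}\sigma_{i_2}\cdots\sigma_{i_n}\sigma_{N+1}^n)+O(1/N)$$ as $N\to\infty$. Consequently, in the thermodynamic limit at $t=1$, the (quenched, replicated) Boltzmann average of a fillable multi-overlap monomial equals the Boltzmann average of the corresponding filled multi-overlap monomial.
   Context: Diluted two-body model: $\sigma\in\{-1,1\}^N$, $H_N(\sigma,\alpha)=-\sum_{\nu=1}^{P_{\alpha N}}\sigma_{i_\nu}\sigma_{j_\nu}$ with $P_{\alpha N}$ Poisson of mean $\alpha N$ and $\{i_\nu\},\{j_\nu\}$ i.i.d. uniform on $\{1,\dots,N\}$; $\omega_N$ is the Boltzmann state $\omega_N(g)=Z_N^{-1}\sum_\sigma g(\sigma)e^{-\beta H_N(\sigma,\alpha)}$, and $\omega_{N+1}$ is the same object for $N+1$ spins at connectivity $\alpha$. With $\tilde\alpha=\frac N{N+1}\alpha$, the $t$-dependent state is $$\tilde\omega_{N,t}(g)=\frac{1}{Z_{N,t}}\sum_\sigma g(\sigma)\exp\Big(\beta\sum_{\nu=1}^{P_{\tilde\alpha N}}\sigma_{i_\nu}\sigma_{j_\nu}+\beta\sum_{\nu=1}^{P'_{2\tilde\alpha t}}\sigma_{k_\nu}\Big),$$ $P'_{2\tilde\alpha t}$ Poisson of mean $2\tilde\alpha t$, $\{k_\nu\}$ i.i.d.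 uniform on $\{1,\dots,N\}$, independent of everything, $Z_{N,t}$ the normalization. Multi-overlaps of replicas $\sigma^{(1)},\sigma^{(2)},\dots$ (i.i.d. copies under the same quenched disorder) are $q_{a_1\cdots a_n}=\frac1N\sum_{i=1}^N\sigma_i^{(a_1)}\cdots\sigma_i^{(a_n)}$, with $m_a=q_a$. A monomial in the multi-overlaps is called filled (stochastically stable) if every replica index appears in it an even number of times (e.g. $q_{12}^2$, $m^2$, $q_{12}q_{34}q_{1234}$), and fillable otherwise (e.g. $q_{12}$, $m$, $q_{12}q_{34}$). *)

(* Defs.v *)
From Stdlib Require Import Reals List Arith Lia.
From Stdlib Require Import ClassicalEpsilon.
Import ListNotations.
Open Scope R_scope.

(** Conventions: sites are 0-based, so the paper's sites 1..N are 0..N-1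
    and the extra spin N+1 of the (N+1)-system is site N.
    A spin configuration on N sites is a list of N booleans; true = +1. *)

Fixpoint sumR (l : list R) : R :=
  match l with [] => 0 | x :: l => x + sumR l end.
Fixpoint prodR (l : list R) : R :=
  match l with [] => 1 | x :: l => x * prodR l end.

Fixpoint configs (N : nat) : list (list bool) :=
  match N with
  | O => [[]]
  | S n => map (cons true) (configs n) ++ map (cons false) (configs n)
  end.

Definition spin (s : list bool) (i : nat) : R :=
  if nth i s false then 1 else -1.

(** all lists of length P with entries in xs (P i.i.d. uniform draws) *)
Fixpoint tuples {A : Type} (xs : list A) (P : nat) : list (list A) :=
  match P with
  | O => [[]]
  | S p => flat_map (fun x => map (cons x) (tuples xs p)) xs
  end.

Definition avg_list {A : Type} (l : list A) (f : A -> R) : R :=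
  sumR (map f l) / INR (length l).

Definition sites (N : nat) : list nat := seq 0 N.
Definition pairs (N : nat) : list (nat * nat) := list_prod (sites N) (sites N).

Definition series (f : nat -> R) : R :=
  epsilon (inhabits 0) (fun l => infinite_sum f l).

Definition poisson (lam : R) (k : nat) : R :=
  exp (- lam) * lam ^ k / INR (fact k).

Definition ham (E : list (nat * nat)) (s : list bool) : R :=
  - sumR (map (fun e => spin s (fst e) * spin s (snd e)) E).

Definition field (K : list nat) (s : list bool) : R :=
  sumR (map (fun k => spin s k) K).

Definition weight (beta : R) (E : list (nat * nat)) (K : list nat)
  (s : list bool) : R :=
  exp (- beta * ham E s + beta * field K s).

Definition omega (N : nat) (beta : R) (E : list (nat * nat)) (K : list nat)
  (g : list bool -> R) : R :=
  sumR (map (fun s => g s * weight beta E K s) (configs N)) /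
  sumR (map (fun s => weight beta E K s) (configs N)).

Definition Omega (N : nat) (beta : R) (E : list (nat * nat)) (K : list nat)
  (m : nat) (G : list (list bool) -> R) : R :=
  sumR (map (fun ss => G ss * prodR (map (weight beta E K) ss))
            (tuples (configs N) m)) /
  sumR (map (fun ss => prodR (map (weight beta E K) ss))
            (tuples (configs N) m)).

(** Quenched average for the N+1 (or any M) spin system at connectivity alpha:
    P ~ Poisson(alpha M), edges i.i.d. uniform in {0..M-1}^2. *)
Definition qexp_bulk (M : nat) (alpha : R) (F : list (nat * nat) -> R) : R :=
  series (fun P => poisson (alpha * INR M) P *
                   avg_list (tuples (pairs M) P) F).

Definition tilde_alpha (N : nat) (alpha : R) : R := INR N / INR (N + 1) * alpha.

(** Quenched average for the t-dependent state on N spins: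
    P ~ Poisson(tilde_alpha N), P' ~ Poisson(2 tilde_alpha t), independent,
    edges i.i.d. uniform in {0..N-1}^2, k_nu i.i.d. uniform in {0..N-1}. *)
Definition qexp_t (N : nat) (alpha t : R)
  (F : list (nat * nat) -> list nat -> R) : R :=
  series (fun P => poisson (tilde_alpha N alpha * INR N) P *
    avg_list (tuples (pairs N) P) (fun E =>
      series (fun P' => poisson (2 * tilde_alpha N alpha * t) P' *
        avg_list (tuples (sites N) P') (fun K => F E K)))).

Definition spin_mono (s : list bool) (idx : list nat) : R :=
  prodR (map (spin s) idx).

(** multi-overlap q_A = (1/M) sum_i prod_{a in A} sigma_i^{(a)}
    (replica indices 0-based) *)
Definition overlap (M : nat) (A : list nat) (ss : list (list bool)) : R :=
  / INR M * sumR (map (fun i => prodR (map (fun a => spin (nth a ss []) i) A))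
                      (sites M)).

(** a monomial in the multi-overlaps: a list of index sets A, meaning prod_A q_A *)
Definition mono_val (M : nat) (mono : list (list nat)) (ss : list (list bool)) : R :=
  prodR (map (fun A => overlap M A ss) mono).

Definition occ (a : nat) (mono : list (list nat)) : nat :=
  list_sum (map (fun A => count_occ Nat.eq_dec A a) mono).

Definition valid_mono (m : nat) (mono : list (list nat)) : Prop :=
  Forall (fun A => A <> [] /\ NoDup A /\ Forall (fun a => (a < m)%nat) A) mono.

Definition filled (m : nat) (mono : list (list nat)) : Prop :=
  forall a, (a < m)%nat -> Nat.even (occ a mono) = true.

Definition fillable (m : nat) (mono : list (list nat)) : Prop := ~ filled m mono.

Definition odd_set (m : nat) (mono : list (list nat)) : list nat :=
  filter (fun a => Nat.odd (occ a mono)) (seq 0 m).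

Definition fill (m : nat) (mono : list (list nat)) : list (list nat) :=
  mono ++ [odd_set m mono].

(* Main.v *)
Require Import Defs.
From Stdlib Require Import Reals List Arith Lia Lra Permutation FunctionalExtensionality ClassicalEpsilon.
Import ListNotations.
Open Scope R_scope.

Definition sumL {A : Type} (l : list A) (f : A -> R) : R := sumR (map f l).

Lemma sumR_app l1 l2 : sumR (l1 ++ l2) = sumR l1 + sumR l2.
Proof. induction l1; simpl; [lra|rewrite IHl1; lra]. Qed.

Lemma sumL_nil {A} (f : A -> R) : sumL [] f = 0. Proof. reflexivity. Qed.
Lemma sumL_cons {A} (x : A) l f : sumL (x :: l) f = f x + sumL l f.
Proof. reflexivity. Qed.
Lemma sumL_app {A} (l1 l2 : list A) f : sumL (l1 ++ l2) f = sumL l1 f + sumL l2 f.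
Proof. unfold sumL; rewrite map_app, sumR_app; reflexivity. Qed.

Lemma sumL_ext_in {A} (l : list A) f g :
  (forall x, In x l -> f x = g x) -> sumL l f = sumL l g.
Proof.
  induction l; intros H; simpl; auto.
  rewrite !sumL_cons, H by (left; auto). rewrite IHl; auto.
  intros; apply H; right; auto.
Qed.

Lemma sumL_ext {A} (l : list A) f g :
  (forall x, f x = g x) -> sumL l f = sumL l g.
Proof. intros; apply sumL_ext_in; auto. Qed.

Lemma sumL_plus {A} (l : list A) f g :
  sumL l (fun x => f x + g x) = sumL l f + sumL l g.
Proof. induction l; rewrite ?sumL_cons, ?sumL_nil; [lra|rewrite IHl; lra]. Qed.

Lemma sumL_minus {A} (l : list A) f g :
  sumL l (fun x => f x - g x) = sumL l f - sumL l g.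
Proof. induction l; rewrite ?sumL_cons, ?sumL_nil; [lra|rewrite IHl; lra]. Qed.

Lemma sumL_scal {A} (l : list A) c f :
  sumL l (fun x => c * f x) = c * sumL l f.
Proof. induction l; rewrite ?sumL_cons, ?sumL_nil; [lra|rewrite IHl; lra]. Qed.

Lemma sumL_scal_r {A} (l : list A) c f :
  sumL l (fun x => f x * c) = sumL l f * c.
Proof. induction l; rewrite ?sumL_cons, ?sumL_nil; [lra|rewrite IHl; lra]. Qed.

Lemma sumL_const {A} (l : list A) c : sumL l (fun _ => c) = INR (length l) * c.
Proof. induction l; rewrite ?sumL_cons, ?sumL_nil; simpl length; [simpl; lra|rewrite IHl, S_INR; lra]. Qed.

Lemma sumL_zero {A} (l : list A) : sumL l (fun _ => 0) = 0.
Proof. rewrite sumL_const; lra. Qed.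

Lemma sumL_perm {A} (l l' : list A) f : Permutation l l' -> sumL l f = sumL l' f.
Proof.
  induction 1; rewrite ?sumL_cons; try lra; try congruence.
  all: try (rewrite IHPermutation; lra).
Qed.

Lemma sumL_map {A B} (l : list A) (g : A -> B) f : sumL (map g l) f = sumL l (fun x => f (g x)).
Proof. unfold sumL; rewrite map_map; reflexivity. Qed.

Lemma sumL_flat_map {A B} (l : list A) (g : A -> list B) f :
  sumL (flat_map g l) f = sumL l (fun x => sumL (g x) f).
Proof. induction l; simpl; auto. rewrite sumL_app, sumL_cons, IHl; reflexivity. Qed.

Lemma sumL_filter {A} (l : list A) (p : A -> bool) f :
  sumL l f = sumL (filter p l) f + sumL (filter (fun x => negb (p x)) l) f.
Proof.
  induction l; simpl; [rewrite sumL_nil; lra|].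
  destruct (p a); simpl; rewrite !sumL_cons, IHl; lra.
Qed.

Lemma sumL_swap {A B} (l1 : list A) (l2 : list B) f :
  sumL l1 (fun x => sumL l2 (fun y => f x y)) = sumL l2 (fun y => sumL l1 (fun x => f x y)).
Proof.
  induction l1; simpl.
  - rewrite sumL_nil; symmetry; apply sumL_zero.
  - rewrite sumL_cons, IHl1, <- sumL_plus; reflexivity.
Qed.

Lemma sumL_le {A} (l : list A) f g :
  (forall x, In x l -> f x <= g x) -> sumL l f <= sumL l g.
Proof.
  induction l; intros H; rewrite ?sumL_cons, ?sumL_nil; [lra|].
  assert (f a <= g a) by (apply H; left; auto).
  assert (sumL l f <= sumL l g) by (apply IHl; intros; apply H; right; auto). lra.
Qed.

Lemma sumL_abs {A} (l : list A) f : Rabs (sumL l f) <= sumL l (fun x => Rabs (f x)).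
Proof.
  induction l; rewrite ?sumL_cons, ?sumL_nil; [rewrite Rabs_R0; lra|].
  eapply Rle_trans; [apply Rabs_triang|]. lra.
Qed.

Lemma sumL_pos {A} (l : list A) f :
  (forall x, In x l -> 0 < f x) -> l <> [] -> 0 < sumL l f.
Proof.
  induction l; intros H Hn; [congruence|].
  rewrite sumL_cons. destruct l.
  - rewrite sumL_nil; specialize (H a (or_introl eq_refl)); lra.
  - assert (0 < f a) by (apply H; left; auto).
    assert (0 < sumL (a0 :: l) f) by (apply IHl; [intros; apply H; right; auto|discriminate]). lra.
Qed.

Lemma sumL_nonneg {A} (l : list A) f :
  (forall x, In x l -> 0 <= f x) -> 0 <= sumL l f.
Proof. intros H. rewrite <- (sumL_zero l). apply sumL_le; auto. Qed.

Lemma sumL_abs_le {A} (l : list A) f B :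
  (forall x, In x l -> Rabs (f x) <= B) -> Rabs (sumL l f) <= INR (length l) * B.
Proof.
  intros H. eapply Rle_trans; [apply sumL_abs|]. rewrite <- sumL_const. apply sumL_le; auto.
Qed.

Lemma sumL_sum_f {A} (l : list A) (f : A -> nat -> R) n :
  sumL l (fun x => sum_f_R0 (f x) n) = sum_f_R0 (fun k => sumL l (fun x => f x k)) n.
Proof.
  induction n; simpl; auto. rewrite sumL_plus, IHn; reflexivity.
Qed.

Lemma prodR_abs_le1 {A} (l : list A) f :
  (forall x, In x l -> Rabs (f x) <= 1) -> Rabs (prodR (map f l)) <= 1.
Proof.
  induction l; intros H; simpl; [rewrite Rabs_R1; lra|].
  rewrite Rabs_mult. assert (Rabs (f a) <= 1) by (apply H; left; auto).
  assert (Rabs (prodR (map f l)) <= 1) by (apply IHl; intros; apply H; right; auto).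
  assert (0 <= Rabs (f a)) by apply Rabs_pos.
  assert (0 <= Rabs (prodR (map f l))) by apply Rabs_pos. nra.
Qed.

Lemma prodR_pos {A} (l : list A) f :
  (forall x, In x l -> 0 < f x) -> 0 < prodR (map f l).
Proof.
  induction l; intros H; simpl; [lra|].
  assert (0 < f a) by (apply H; left; auto).
  assert (0 < prodR (map f l)) by (apply IHl; intros; apply H; right; auto). nra.
Qed.

Lemma prodR_mult {A} (l : list A) f g :
  prodR (map (fun x => f x * g x) l) = prodR (map f l) * prodR (map g l).
Proof. induction l; simpl; [lra|rewrite IHl; lra]. Qed.

Lemma prodR_ext_in {A} (l : list A) f g :
  (forall x, In x l -> f x = g x) -> prodR (map f l) = prodR (map g l).
Proof. intros H; f_equal; apply map_ext_in; auto. Qed.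

Lemma prodR_diff {A} (l : list A) f g :
  (forall x, In x l -> Rabs (f x) <= 1) -> (forall x, In x l -> Rabs (g x) <= 1) ->
  Rabs (prodR (map f l) - prodR (map g l)) <= sumL l (fun x => Rabs (f x - g x)).
Proof.
  induction l; intros Hf Hg; simpl; rewrite ?sumL_cons, ?sumL_nil.
  - replace (1-1) with 0 by lra; rewrite Rabs_R0; lra.
  - replace (f a * prodR (map f l) - g a * prodR (map g l)) with
      ((f a - g a) * prodR (map f l) + g a * (prodR (map f l) - prodR (map g l))) by ring.
    eapply Rle_trans; [apply Rabs_triang|]. rewrite !Rabs_mult.
    assert (H1 : Rabs (prodR (map f l)) <= 1) by (apply prodR_abs_le1; intros; apply Hf; right; auto).
    assert (H2 : Rabs (g a) <= 1) by (apply Hg; left; auto).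
    assert (H3 := IHl (fun x H => Hf x (or_intror H)) (fun x H => Hg x (or_intror H))).
    assert (0 <= Rabs (f a - g a)) by apply Rabs_pos.
    assert (0 <= Rabs (prodR (map f l) - prodR (map g l))) by apply Rabs_pos.
    assert (0 <= Rabs (g a)) by apply Rabs_pos.
    assert (0 <= Rabs (prodR (map f l))) by apply Rabs_pos. nra.
Qed.

Lemma sumL_tuples_S {A} (X : list A) p F :
  sumL (tuples X (S p)) F = sumL X (fun x => sumL (tuples X p) (fun t => F (x :: t))).
Proof. simpl. rewrite sumL_flat_map. apply sumL_ext; intros; apply sumL_map. Qed.

Lemma sumL_tuples_0 {A} (X : list A) F : sumL (tuples X 0) F = F [].
Proof. simpl. rewrite sumL_cons, sumL_nil; lra. Qed.

Lemma length_tuples {A} (X : list A) P : length (tuples X P) = (length X ^ P)%nat.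
Proof.
  induction P; simpl; auto.
  rewrite flat_map_concat_map, length_concat, map_map.
  erewrite map_ext by (intros; rewrite length_map; reflexivity).
  rewrite IHP. generalize (length X ^ P)%nat as c; intros c; clear IHP.
  induction X; simpl; auto.
Qed.

Lemma In_tuples {A} (X : list A) P E :
  In E (tuples X P) <-> (length E = P /\ forall y, In y E -> In y X).
Proof.
  revert E; induction P; intros E; simpl.
  - split. intros [<-|[]]; simpl; split; auto; intros _ [].
    intros [H _]; destruct E; simpl in *; auto; discriminate.
  - rewrite in_flat_map. split.
    + intros [x [Hx HE]]. apply in_map_iff in HE. destruct HE as [t [<- Ht]].
      apply IHP in Ht. destruct Ht as [Hl Hin]. simpl; split; [lia|].
      intros y [<-|Hy]; auto.
    + intros [Hl Hin]. destruct E as [|x t]; simpl in Hl; [discriminate|].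
      exists x; split; [apply Hin; left; auto|]. apply in_map. apply IHP; split; [lia|].
      intros; apply Hin; right; auto.
Qed.

Lemma length_tuples_pos {A} (X : list A) P : X <> [] -> (0 < length (tuples X P))%nat.
Proof.
  intros H. rewrite length_tuples. destruct X; [congruence|]. simpl.
  apply Nat.neq_0_lt_0. apply Nat.pow_nonzero. lia.
Qed.

Lemma sumL_tuples_perm {A} (X Y : list A) P F :
  Permutation X Y -> sumL (tuples X P) F = sumL (tuples Y P) F.
Proof.
  intros HP. revert F; induction P; intros F; [reflexivity|].
  rewrite !sumL_tuples_S. rewrite (sumL_perm X Y) by auto.
  apply sumL_ext; intros; apply IHP.
Qed.

Lemma tuples_map {A B} (g : A -> B) X P : tuples (map g X) P = map (map g) (tuples X P).
Proof.
  induction P; simpl; auto.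
  rewrite IHP. rewrite flat_map_concat_map, map_map, flat_map_concat_map, concat_map, map_map.
  f_equal. apply map_ext; intros. rewrite !map_map. reflexivity.
Qed.

Lemma sumL_tuples_map {A B} (g : A -> B) X P F :
  sumL (tuples (map g X) P) F = sumL (tuples X P) (fun E => F (map g E)).
Proof. rewrite tuples_map, sumL_map; reflexivity. Qed.

Lemma sumL_tuples_double {A} (X : list A) P F :
  sumL (tuples (X ++ X) P) F = 2 ^ P * sumL (tuples X P) F.
Proof.
  revert F; induction P; intros F.
  - rewrite !sumL_tuples_0; simpl; lra.
  - rewrite !sumL_tuples_S, sumL_app.
    rewrite (sumL_ext _ (fun x => sumL (tuples (X ++ X) P) (fun t => F (x :: t)))
             (fun x => 2 ^ P * sumL (tuples X P) (fun t => F (x :: t)))) by (intros; apply IHP).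
    rewrite sumL_scal. simpl. lra.
Qed.

Lemma NoDup_map_in {A B} (h : A -> B) l :
  NoDup l -> (forall x y, In x l -> In y l -> h x = h y -> x = y) -> NoDup (map h l).
Proof.
  induction l; intros Hn Hi; simpl; constructor.
  - inversion Hn; subst. intros Hin. apply in_map_iff in Hin. destruct Hin as [y [Hy Hy']].
    assert (y = a) by (apply Hi; simpl; auto). subst; contradiction.
  - inversion Hn; subst. apply IHl; auto. intros; apply Hi; simpl; auto.
Qed.

Lemma NoDup_flat_cons {A} (Y : list A) (T : list (list A)) :
  NoDup Y -> NoDup T -> NoDup (flat_map (fun x => map (cons x) T) Y).
Proof.
  intros HY HT. induction Y; simpl; [constructor|].
  inversion HY; subst. apply NoDup_app.
  - apply NoDup_map_in; auto. intros x y _ _ H; inversion H; auto.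
  - apply IHY; auto.
  - intros x Hx Hx'. apply in_map_iff in Hx. destruct Hx as [t [<- _]].
    apply in_flat_map in Hx'. destruct Hx' as [z [Hz Hz']]. apply in_map_iff in Hz'.
    destruct Hz' as [t' [Heq _]]. inversion Heq; subst. contradiction.
Qed.

Lemma NoDup_tuples {A} (X : list A) P : NoDup X -> NoDup (tuples X P).
Proof.
  intros HX. induction P; simpl. constructor; [intros []|constructor].
  apply NoDup_flat_cons; auto.
Qed.

Lemma In_configs N s : In s (configs N) <-> length s = N.
Proof.
  revert s; induction N; intros s; simpl.
  - split; [intros [<-|[]]; auto|intros H; destruct s; [auto|discriminate]].
  - rewrite in_app_iff, !in_map_iff. split.
    + intros [[t [<- Ht]]|[t [<- Ht]]]; apply IHN in Ht; simpl; lia.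
    + intros H. destruct s as [|b t]; [discriminate|]. simpl in H.
      destruct b; [left|right]; exists t; split; auto; apply IHN; lia.
Qed.

Lemma NoDup_configs N : NoDup (configs N).
Proof.
  induction N; simpl. constructor; [intros []|constructor].
  apply NoDup_app.
  - apply NoDup_map_in; auto. intros x y _ _ H; inversion H; auto.
  - apply NoDup_map_in; auto. intros x y _ _ H; inversion H; auto.
  - intros x H1 H2. apply in_map_iff in H1, H2. destruct H1 as [? [<- _]]. destruct H2 as [? [H _]].
    discriminate.
Qed.

Lemma configs_nonempty N : configs N <> [].
Proof. intros H. assert (In (repeat true N) (configs N)) by (apply In_configs; apply repeat_length).
  rewrite H in H0; auto. Qed.

Lemma sumL_configs_bij N (h : list bool -> list bool) f :
  (forall s, length s = N -> length (h s) = N /\ h (h s) = s) ->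
  sumL (configs N) (fun s => f (h s)) = sumL (configs N) f.
Proof.
  intros Hh. rewrite <- sumL_map. apply sumL_perm. apply NoDup_Permutation.
  - apply NoDup_map_in. apply NoDup_configs. intros x y Hx Hy Hxy.
    apply In_configs in Hx, Hy. rewrite <- (proj2 (Hh x Hx)), <- (proj2 (Hh y Hy)), Hxy; auto.
  - apply NoDup_configs.
  - intros x. rewrite in_map_iff, In_configs. split.
    + intros [y [<- Hy]]. apply In_configs in Hy. apply Hh; auto.
    + intros Hx. exists (h x). split; [apply Hh; auto|]. apply In_configs; apply Hh; auto.
Qed.

Lemma length_configs N : length (configs N) = (2 ^ N)%nat.
Proof. induction N; simpl; auto. rewrite length_app, !length_map, IHN. lia. Qed.

Lemma sumL_configs_last N f :
  sumL (configs (S N)) f = sumL (configs N) (fun s => f (s ++ [true]) + f (s ++ [false])).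
Proof.
  transitivity (sumL (flat_map (fun s => [s ++ [true]; s ++ [false]]) (configs N)) f).
  - apply sumL_perm. apply NoDup_Permutation_bis.
    + apply NoDup_configs.
    + rewrite length_configs, flat_map_concat_map, length_concat, map_map.
      replace (2 ^ S N)%nat with (2 * length (configs N))%nat by (rewrite length_configs; simpl; lia).
      generalize (configs N). intros l. induction l; simpl; auto. simpl in IHl. lia.
    + intros x Hx. apply In_configs in Hx. apply in_flat_map.
      destruct x as [|b0 x0]; [discriminate|].
      destruct (@exists_last _ (b0 :: x0)) as [t [b Ht]]; [discriminate|].
      rewrite Ht in Hx |- *. rewrite length_app in Hx; simpl in Hx.
      exists t. split; [apply In_configs; lia|]. destruct b; simpl; auto.
  - rewrite sumL_flat_map. apply sumL_ext; intros. rewrite !sumL_cons, sumL_nil; lra.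
Qed.

Lemma series_eq f l : infinite_sum f l -> series f = l.
Proof.
  intros H. unfold series.
  assert (Hex : exists l, infinite_sum f l) by (exists l; auto).
  pose proof (epsilon_spec (inhabits 0) (fun l => infinite_sum f l) Hex) as Hs.
  eapply uniqueness_sum; eauto.
Qed.

Lemma Un_cv_shift u l M : Un_cv u l -> Un_cv (fun K => u (K + M)%nat) l.
Proof.
  intros H eps He. destruct (H eps He) as [N HN]. exists N. intros n Hn. apply HN. lia.
Qed.

Lemma Un_cv_abs u l : Un_cv u l -> Un_cv (fun n => Rabs (u n)) (Rabs l).
Proof.
  intros H eps He. destruct (H eps He) as [N HN]. exists N. intros n Hn.
  specialize (HN n Hn). unfold Rdist in *. eapply Rle_lt_trans; [apply Rabs_triang_inv2|]. auto.
Qed.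

Lemma Un_cv_const c : Un_cv (fun _ => c) c.
Proof. intros eps He. exists 0%nat. intros. unfold Rdist. replace (c - c) with 0 by lra. rewrite Rabs_R0; lra. Qed.

Lemma sum_f_diff_bound (a b : nat -> R) M K :
  (forall j, Rabs (a j) <= b j) ->
  Rabs (sum_f_R0 a (K + M) - sum_f_R0 a M) <= sum_f_R0 b (K + M) - sum_f_R0 b M.
Proof.
  intros H. induction K; simpl.
  - replace (sum_f_R0 a M - sum_f_R0 a M) with 0 by lra. rewrite Rabs_R0; lra.
  - replace (sum_f_R0 a (K + M) + a (S (K + M)) - sum_f_R0 a M) with
      ((sum_f_R0 a (K + M) - sum_f_R0 a M) + a (S (K + M))) by lra.
    eapply Rle_trans; [apply Rabs_triang|]. specialize (H (S (K+M))). lra.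
Qed.

Lemma tail_bound (a b : nat -> R) L Lb M :
  (forall j, Rabs (a j) <= b j) -> infinite_sum a L -> infinite_sum b Lb ->
  Rabs (L - sum_f_R0 a M) <= Lb - sum_f_R0 b M.
Proof.
  intros H Ha Hb.
  apply (Rle_cv_lim (Un := fun K => Rabs (sum_f_R0 a (K + M) - sum_f_R0 a M))
                    (Vn := fun K => sum_f_R0 b (K + M) - sum_f_R0 b M)).
  - intros; apply sum_f_diff_bound; auto.
  - apply Un_cv_abs. apply CV_minus; [apply Un_cv_shift; apply Ha|apply Un_cv_const].
  - apply CV_minus; [apply Un_cv_shift; apply Hb|apply Un_cv_const].
Qed.

Lemma sum_bound (a b : nat -> R) L Lb :
  (forall j, Rabs (a j) <= b j) -> infinite_sum a L -> infinite_sum b Lb -> Rabs L <= Lb.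
Proof.
  intros H Ha Hb.
  apply (Rle_cv_lim (Un := fun K => Rabs (sum_f_R0 a K)) (Vn := fun K => sum_f_R0 b K)).
  - intros K. eapply Rle_trans; [apply Rsum_abs|]. apply sum_Rle. intros; auto.
  - apply Un_cv_abs; apply Ha.
  - apply Hb.
Qed.

Lemma dom_cv (a b : nat -> R) Lb :
  (forall j, Rabs (a j) <= b j) -> infinite_sum b Lb -> exists L, infinite_sum a L.
Proof.
  intros H Hb.
  assert (Hc : Cauchy_crit_series (fun i => Rabs (a i))).
  { apply cv_cauchy_1. apply (Rseries_CV_comp (fun i => Rabs (a i)) b).
    - intros; split; [apply Rabs_pos|auto].
    - exists Lb; apply Hb. }
  apply cauchy_abs in Hc. apply cv_cauchy_2 in Hc. destruct Hc as [L HL]. exists L; apply HL.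
Qed.

Lemma infinite_sum_ext a b L : (forall n, a n = b n) -> infinite_sum a L -> infinite_sum b L.
Proof.
  intros H Ha eps He. destruct (Ha eps He) as [N HN]. exists N. intros n Hn.
  rewrite <- (sum_eq a b) by auto. auto.
Qed.

Lemma infinite_sum_plus a b La Lb :
  infinite_sum a La -> infinite_sum b Lb -> infinite_sum (fun n => a n + b n) (La + Lb).
Proof.
  intros Ha Hb. pose proof (CV_plus _ _ _ _ Ha Hb) as H.
  intros eps He. destruct (H eps He) as [N HN]. exists N. intros n Hn.
  rewrite plus_sum. apply HN; auto.
Qed.

Lemma infinite_sum_scal a La c :
  infinite_sum a La -> infinite_sum (fun n => c * a n) (c * La).
Proof.
  intros Ha. pose proof (CV_mult _ _ _ _ (Un_cv_const c) Ha) as H.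
  intros eps He. destruct (H eps He) as [N HN]. exists N. intros n Hn.
  replace (sum_f_R0 (fun n0 => c * a n0) n) with (c * sum_f_R0 a n) by (rewrite scal_sum; apply sum_eq; intros; lra). apply HN; auto.
Qed.

Lemma infinite_sum_sumL {A} (l : list A) (a : A -> nat -> R) (La : A -> R) :
  (forall x, In x l -> infinite_sum (a x) (La x)) ->
  infinite_sum (fun n => sumL l (fun x => a x n)) (sumL l La).
Proof.
  induction l; intros H.
  - intros eps He; exists 0%nat; intros n _. rewrite sum_eq_R0 by (intros; reflexivity).
    unfold Rdist. rewrite sumL_nil. replace (0-0) with 0 by lra. rewrite Rabs_R0; lra.
  - rewrite sumL_cons. eapply infinite_sum_ext; [|apply infinite_sum_plus].
    + intros n; simpl. reflexivity.
    + apply H; left; auto.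
    + apply IHl; intros; apply H; right; auto.
Qed.

Lemma exp_sum u : infinite_sum (fun i => u ^ i / INR (fact i)) (exp u).
Proof.
  unfold exp. destruct (exist_exp u) as [l Hl]. simpl. unfold exp_in in Hl.
  eapply infinite_sum_ext; [|apply Hl]. intros; simpl. unfold Rdiv; lra.
Qed.

Lemma poisson_sum lam : infinite_sum (poisson lam) 1.
Proof.
  replace 1 with (exp (- lam) * exp lam) by (rewrite <- exp_plus; replace (- lam + lam) with 0 by lra; apply exp_0).
  eapply infinite_sum_ext; [|apply (infinite_sum_scal _ _ (exp (- lam)) (exp_sum lam))].
  intros; unfold poisson; simpl. unfold Rdiv; lra.
Qed.

Lemma poisson_nonneg lam k : 0 <= lam -> 0 <= poisson lam k.
Proof.
  intros H. unfold poisson. apply Rmult_le_pos.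
  - apply Rmult_le_pos; [left; apply exp_pos|apply pow_le; auto].
  - left; apply Rinv_0_lt_compat. apply INR_fact_lt_0.
Qed.

Lemma sum_ind_split (p : nat -> R) M N : (M <= N)%nat ->
  sum_f_R0 (fun i => if Nat.leb i M then 0 else p i) N = sum_f_R0 p N - sum_f_R0 p M.
Proof.
  intros H. induction H.
  - rewrite sum_eq_R0; [lra|]. intros i Hi. apply Nat.leb_le in Hi. rewrite Hi; auto.
  - simpl. rewrite IHle. assert (Nat.leb (S m) M = false) by (apply Nat.leb_gt; lia).
    simpl in H0 |- *. rewrite H0. lra.
Qed.

Lemma sum_nonneg_le (p : nat -> R) S N : (forall i, 0 <= p i) -> infinite_sum p S -> sum_f_R0 p N <= S.
Proof. intros Hp HS. apply sum_incr; auto. Qed.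

Lemma conv_null (p q : nat -> R) S Q :
  (forall i, 0 <= p i) -> infinite_sum p S ->
  (forall M, 0 <= q M <= Q) -> Un_cv q 0 ->
  Un_cv (fun N => sum_f_R0 (fun i => p i * q (N - i)%nat) N) 0.
Proof.
  intros Hp HS Hq Hq0 eps He.
  assert (HS0 : 0 <= S) by (apply Rle_trans with (sum_f_R0 p 0); [simpl; auto|apply sum_nonneg_le; auto]).
  assert (HQ : 0 <= Q) by (destruct (Hq 0%nat); lra).
  set (e1 := eps / (2 * (S + 1))). set (e2 := eps / (2 * (Q + 1))).
  assert (He1 : 0 < e1) by (unfold e1; apply Rdiv_lt_0_compat; lra).
  assert (He2 : 0 < e2) by (unfold e2; apply Rdiv_lt_0_compat; lra).
  destruct (Hq0 e1 He1) as [M1 HM1].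
  destruct (HS e2 He2) as [M2 HM2].
  exists (M1 + M2)%nat. intros N HN.
  assert (Hb : forall i, (i <= N)%nat -> p i * q (N - i)%nat <= p i * e1 + Q * (if Nat.leb i M2 then 0 else p i)).
  { intros i Hi. destruct (Nat.leb i M2) eqn:E.
    - apply Nat.leb_le in E. assert (q (N - i)%nat < e1).
      { specialize (HM1 (N - i)%nat ltac:(lia)). unfold Rdist in HM1. rewrite Rminus_0_r in HM1.
        apply Rle_lt_trans with (Rabs (q (N - i)%nat)); [apply Rle_abs|auto]. }
      specialize (Hp i). nra.
    - specialize (Hp i). specialize (Hq (N - i)%nat). nra. }
  assert (H0 : 0 <= sum_f_R0 (fun i => p i * q (N - i)%nat) N).
  { apply cond_pos_sum. intros; apply Rmult_le_pos; [apply Hp|apply Hq]. }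
  unfold Rdist. rewrite Rminus_0_r, Rabs_right by lra.
  eapply Rle_lt_trans.
  { apply sum_Rle. intros i Hi. apply Hb; auto. }
  rewrite plus_sum, <- scal_sum.
  rewrite (sum_eq (fun i => Q * (if Nat.leb i M2 then 0 else p i)) (fun i => (if Nat.leb i M2 then 0 else p i) * Q)) by (intros; lra).
  rewrite <- scal_sum, sum_ind_split by lia.
  assert (sum_f_R0 p N <= S) by (apply sum_nonneg_le; auto).
  assert (S - sum_f_R0 p M2 < e2).
  { specialize (HM2 M2 ltac:(lia)). unfold Rdist in HM2.
    assert (sum_f_R0 p M2 <= S) by (apply sum_nonneg_le; auto).
    rewrite Rabs_left1 in HM2; lra. }
  assert (sum_f_R0 p N * e1 <= S * e1) by (apply Rmult_le_compat_r; lra).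
  assert (S * e1 < eps / 2).
  { unfold e1. replace (S * (eps / (2 * (S + 1)))) with ((eps / 2) * (S / (S + 1))) by (field; lra).
    assert (S / (S + 1) < 1).
    { apply Rmult_lt_reg_r with (S + 1); [lra|]. unfold Rdiv. rewrite Rmult_assoc, Rinv_l; lra. }
    nra. }
  assert ((sum_f_R0 p N - sum_f_R0 p M2) * Q <= (S - sum_f_R0 p M2) * Q) by (apply Rmult_le_compat_r; lra).
  assert ((S - sum_f_R0 p M2) * Q <= e2 * Q) by (apply Rmult_le_compat_r; lra).
  assert (e2 * Q < eps / 2).
  { unfold e2. replace (eps / (2 * (Q + 1)) * Q) with ((eps / 2) * (Q / (Q + 1))) by (field; lra).
    assert (Q / (Q + 1) < 1).
    { apply Rmult_lt_reg_r with (Q + 1); [lra|]. unfold Rdiv. rewrite Rmult_assoc, Rinv_l; lra. }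
    nra. }
  lra.
Qed.

Lemma diag_reindex (a : nat -> nat -> R) N :
  sum_f_R0 (fun n => sum_f_R0 (fun i => a i (n - i)%nat) n) N =
  sum_f_R0 (fun i => sum_f_R0 (fun j => a i j) (N - i)%nat) N.
Proof.
  induction N.
  - simpl. reflexivity.
  - rewrite tech5, IHN.
    rewrite (tech5 (fun i => sum_f_R0 (fun j => a i j) (S N - i)%nat) N).
    rewrite (tech5 (fun i => a i (S N - i)%nat) N).
    replace (S N - S N)%nat with 0%nat by lia. simpl (sum_f_R0 (fun j => a (S N) j) 0).
    rewrite (sum_eq (fun i => sum_f_R0 (fun j => a i j) (S N - i)%nat)
                    (fun i => sum_f_R0 (fun j => a i j) (N - i)%nat + a i (S N - i)%nat)).
    + rewrite plus_sum. lra.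
    + intros i Hi. replace (S N - i)%nat with (S (N - i)) by lia. rewrite tech5. reflexivity.
Qed.

Definition expt (u : R) (i : nat) : R := u ^ i / INR (fact i).

Lemma expt_nonneg u i : 0 <= u -> 0 <= expt u i.
Proof. intros; unfold expt. apply Rmult_le_pos; [apply pow_le; auto|left; apply Rinv_0_lt_compat, INR_fact_lt_0]. Qed.

Lemma fubini (a : nat -> nat -> R) c u v :
  0 <= c -> 0 <= u -> 0 <= v ->
  (forall i j, Rabs (a i j) <= c * expt u i * expt v j) ->
  (forall i, infinite_sum (a i) (series (a i))) /\
  infinite_sum (fun i => series (a i)) (series (fun n => sum_f_R0 (fun i => a i (n - i)%nat) n)).
Proof.
  intros Hc Hu Hv Hd.
  assert (Hb : forall i, infinite_sum (fun j => c * expt u i * expt v j) (c * expt u i * exp v)).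
  { intros i. apply infinite_sum_scal. apply exp_sum. }
  assert (Hai : forall i, infinite_sum (a i) (series (a i))).
  { intros i. destruct (dom_cv (a i) _ _ (Hd i) (Hb i)) as [L HL]. rewrite (series_eq _ _ HL); auto. }
  split; auto.
  set (g := fun i => series (a i)).
  assert (Hg : forall i, Rabs (g i) <= c * exp v * expt u i).
  { intros i. replace (c * exp v * expt u i) with (c * expt u i * exp v) by ring.
    apply (sum_bound (a i) _ _ _ (Hd i) (Hai i) (Hb i)). }
  assert (Hgs : infinite_sum (fun i => c * exp v * expt u i) (c * exp v * exp u)).
  { apply infinite_sum_scal. apply exp_sum. }
  destruct (dom_cv g _ _ Hg Hgs) as [L HL].
  set (t := fun M => exp v - sum_f_R0 (expt v) M).
  assert (Ht : forall M, 0 <= t M <= exp v).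
  { intros M; unfold t. split.
    - assert (sum_f_R0 (expt v) M <= exp v) by (apply sum_incr; [apply exp_sum|intros; apply expt_nonneg; auto]). lra.
    - assert (0 <= sum_f_R0 (expt v) M) by (apply cond_pos_sum; intros; apply expt_nonneg; auto). lra. }
  assert (Ht0 : Un_cv t 0).
  { intros eps He. destruct (exp_sum v eps He) as [N HN]. exists N. intros n Hn.
    specialize (HN n Hn). unfold Rdist, t in *. rewrite Rminus_0_r.
    rewrite Rabs_minus_sym. replace (sum_f_R0 (expt v) n - exp v) with (sum_f_R0 (fun i => v ^ i / INR (fact i)) n - exp v); auto. }
  assert (Hdiff : Un_cv (fun N => sum_f_R0 g N - sum_f_R0 (fun n => sum_f_R0 (fun i => a i (n - i)%nat) n) N) 0).
  { pose proof (conv_null (expt u) t (exp u) (exp v) (fun i => expt_nonneg u i Hu) (exp_sum u) Ht Ht0) as Hcv.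
    intros eps He. destruct (Hcv (eps / (c + 1))) as [N HN]. { apply Rdiv_lt_0_compat; lra. }
    exists N. intros n Hn. specialize (HN n Hn). unfold Rdist in *. rewrite Rminus_0_r in *.
    rewrite diag_reindex, <- minus_sum.
    assert (Hle : Rabs (sum_f_R0 (fun i => g i - sum_f_R0 (fun j => a i j) (n - i)%nat) n)
             <= c * sum_f_R0 (fun i => expt u i * t (n - i)%nat) n).
    { eapply Rle_trans; [apply Rsum_abs|]. rewrite scal_sum.
      apply sum_Rle. intros i Hi.
      pose proof (tail_bound (a i) _ _ _ (n - i)%nat (Hd i) (Hai i) (Hb i)) as T.
      fold (g i) in T. unfold t.
      replace (sum_f_R0 (fun j => c * expt u i * expt v j) (n - i)) with (sum_f_R0 (expt v) (n - i) * (c * expt u i)) in T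
        by (rewrite Rmult_comm, scal_sum; apply sum_eq; intros; ring).
      replace (expt u i * (exp v - sum_f_R0 (expt v) (n - i)) * c) with
        (c * expt u i * exp v - sum_f_R0 (expt v) (n - i) * (c * expt u i)) by ring. auto. }
    assert (H0 : 0 <= sum_f_R0 (fun i => expt u i * t (n - i)%nat) n).
    { apply cond_pos_sum; intros; apply Rmult_le_pos; [apply expt_nonneg; auto|apply Ht]. }
    rewrite Rabs_right in HN by lra.
    eapply Rle_lt_trans; [apply Hle|].
    apply Rle_lt_trans with ((c + 1) * sum_f_R0 (fun i => expt u i * t (n - i)%nat) n); [nra|].
    apply Rmult_lt_reg_l with (/ (c + 1)). { apply Rinv_0_lt_compat; lra. }
    rewrite <- Rmult_assoc, Rinv_l by lra. unfold Rdiv in HN. lra. }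
  assert (Hdg : infinite_sum (fun n => sum_f_R0 (fun i => a i (n - i)%nat) n) L).
  { pose proof (CV_minus _ _ _ _ HL Hdiff) as H. rewrite Rminus_0_r in H.
    intros eps He. destruct (H eps He) as [N HN]. exists N. intros n Hn. specialize (HN n Hn).
    replace (sum_f_R0 g n - (sum_f_R0 g n - sum_f_R0 (fun n0 => sum_f_R0 (fun i => a i (n0 - i)%nat) n0) n))
      with (sum_f_R0 (fun n0 => sum_f_R0 (fun i => a i (n0 - i)%nat) n0) n) in HN by ring. auto. }
  rewrite (series_eq _ _ Hdg). auto.
Qed.

Fixpoint bin (n k : nat) : R :=
  match n, k with
  | _, O => 1
  | O, S _ => 0
  | S n', S k' => bin n' k' + bin n' (S k')
  end.

Lemma bin_gt n k : (n < k)%nat -> bin n k = 0.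
Proof.
  revert k; induction n; intros k H; destruct k; try lia; simpl; auto.
  rewrite !IHn by lia. lra.
Qed.

Lemma bin_fact n k : (k <= n)%nat -> bin n k * INR (fact k) * INR (fact (n - k)) = INR (fact n).
Proof.
  revert k; induction n; intros k H.
  - destruct k; [simpl; lra|lia].
  - destruct k.
    + simpl bin. replace (S n - 0)%nat with (S n) by lia. simpl (fact 0). simpl (INR 1). lra.
    + simpl bin. replace (S n - S k)%nat with (n - k)%nat by lia.
      assert (H1 := IHn k ltac:(lia)).
      destruct (Nat.eq_dec k n) as [->|Hne].
      * rewrite (bin_gt n (S n)) by lia. rewrite Nat.sub_diag in *.
        change (fact (S n)) with (S n * fact n)%nat. rewrite mult_INR, S_INR in *.
        simpl (fact 0) in *. simpl (INR 1) in *. transitivity ((INR n + 1) * (bin n n * INR (fact n) * 1)); [ring|rewrite H1; ring].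
      * assert (H2 := IHn (S k) ltac:(lia)).
        replace (n - k)%nat with (S (n - S k)) by lia.
        change (fact (S n)) with (S n * fact n)%nat.
        change (fact (S k)) with (S k * fact k)%nat.
        change (fact (S (n - S k))) with (S (n - S k) * fact (n - S k))%nat.
        rewrite !mult_INR, !S_INR in *.
        replace (n - k)%nat with (S (n - S k)) in H1 by lia.
        change (fact (S (n - S k))) with (S (n - S k) * fact (n - S k))%nat in H1.
        rewrite mult_INR, S_INR in H1.
        rewrite minus_INR in * by lia. rewrite ?S_INR in *.
        change (fact (S k)) with (S k * fact k)%nat in H2. rewrite mult_INR, S_INR in H2.
        transitivity ((INR k + 1) * (bin n k * INR (fact k) * ((INR n - (INR k + 1) + 1) * INR (fact (n - S k))))
          + (INR n - (INR k + 1) + 1) * (bin n (S k) * ((INR k + 1) * INR (fact k)) * INR (fact (n - S k)))).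
        { ring. }
        rewrite H1, H2. ring.
Qed.

Lemma pascal_sum (U : nat -> R) P :
  sum_f_R0 (fun k => bin P k * (U (S k) + U k)) P = sum_f_R0 (fun k => bin (S P) k * U k) (S P).
Proof.
  rewrite (decomp_sum (fun k => bin (S P) k * U k) (S P)) by lia. simpl pred.
  simpl (bin (S P) 0).
  rewrite (sum_eq (fun i => bin (S P) (S i) * U (S i)) (fun i => bin P i * U (S i) + bin P (S i) * U (S i)))
    by (intros; simpl; ring).
  rewrite plus_sum.
  assert (E : sum_f_R0 (fun k => bin P k * U k) P = U 0%nat + sum_f_R0 (fun i => bin P (S i) * U (S i)) P).
  { transitivity (sum_f_R0 (fun k => bin P k * U k) (S P)).
    - rewrite tech5. rewrite (bin_gt P (S P)) by lia. ring.
    - rewrite decomp_sum by lia. simpl pred. destruct P; simpl bin; ring. }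
  rewrite (sum_eq (fun k => bin P k * (U (S k) + U k)) (fun k => bin P k * U (S k) + bin P k * U k)) by (intros; ring).
  rewrite plus_sum, E. ring.
Qed.

Section Split.
Context {A : Type} (X : list A) (p : A -> bool).
Definition X1 := filter p X.
Definition X2 := filter (fun x => negb (p x)) X.
Definition TT (k l : nat) (Phi : list A -> list A -> R) :=
  sumL (tuples X1 k) (fun E1 => sumL (tuples X2 l) (fun E2 => Phi E1 E2)).

Lemma split_sum P : forall Phi,
  sumL (tuples X P) (fun E => Phi (filter p E) (filter (fun x => negb (p x)) E)) =
  sum_f_R0 (fun k => bin P k * TT k (P - k) Phi) P.
Proof.
  induction P; intros Phi.
  - rewrite sumL_tuples_0. simpl. unfold TT. simpl. rewrite !sumL_cons, !sumL_nil. ring.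
  - rewrite sumL_tuples_S.
    set (Phx := fun x E1 E2 => if p x then Phi (x :: E1) E2 else Phi E1 (x :: E2)).
    rewrite (sumL_ext _ _ (fun x => sumL (tuples X P) (fun t => Phx x (filter p t) (filter (fun x => negb (p x)) t)))).
    2:{ intros x. apply sumL_ext; intros t. unfold Phx. simpl. destruct (p x); reflexivity. }
    rewrite (sumL_ext _ _ (fun x => sum_f_R0 (fun k => bin P k * TT k (P - k) (Phx x)) P)) by (intros; apply IHP).
    rewrite sumL_sum_f.
    rewrite (sum_eq _ (fun k => bin P k * (TT (S k) (P - k) Phi + TT k (S (P - k)) Phi))).
    2:{ intros k Hk. rewrite sumL_scal. f_equal.
        rewrite (sumL_filter X p).
        f_equal.
        - unfold TT. rewrite sumL_tuples_S. apply sumL_ext_in. intros x Hx.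
          apply filter_In in Hx. unfold Phx. rewrite (proj2 Hx). reflexivity.
        - unfold TT. rewrite (sumL_ext_in _ _ (fun x => sumL (tuples X1 k) (fun E1 => sumL (tuples X2 (P - k)) (fun E2 => Phi E1 (x :: E2))))).
          + rewrite sumL_swap. apply sumL_ext; intros E1. rewrite sumL_tuples_S. reflexivity.
          + intros x Hx. apply filter_In in Hx. unfold Phx. destruct (p x); simpl in Hx; [destruct Hx; discriminate|reflexivity]. }
    set (U := fun k => TT k (S P - k) Phi).
    rewrite (sum_eq _ (fun k => bin P k * (U (S k) + U k))).
    + apply pascal_sum.
    + intros k Hk. unfold U. replace (S P - S k)%nat with (P - k)%nat by lia.
      replace (S P - k)%nat with (S (P - k)) by lia. reflexivity.
Qed.
End Split.

Lemma length_filter_split {A} (X : list A) p :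
  length X = (length (filter p X) + length (filter (fun x => negb (p x)) X))%nat.
Proof. induction X; simpl; auto. destruct (p a); simpl; lia. Qed.

Definition Qs {A} (lam : R) (X : list A) (F : list A -> R) : R :=
  series (fun P => poisson lam P * avg_list (tuples X P) F).

Lemma avg_tuples {A} (X : list A) P F :
  avg_list (tuples X P) F = sumL (tuples X P) F / INR (length X) ^ P.
Proof. unfold avg_list. rewrite length_tuples, pow_INR. reflexivity. Qed.

Lemma avg_bound {A} (l : list A) f B :
  0 <= B -> (forall x, In x l -> Rabs (f x) <= B) -> Rabs (avg_list l f) <= B.
Proof.
  intros HB H. unfold avg_list. destruct l as [|y l'].
  - simpl. unfold Rdiv. rewrite Rmult_0_l, Rabs_R0. auto.
  - set (l := y :: l'). assert (Hl : 0 < INR (length l)) by (apply lt_0_INR; simpl; lia).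
    unfold Rdiv. rewrite Rabs_mult, Rabs_inv, (Rabs_right (INR _)) by lra.
    apply Rmult_le_reg_r with (INR (length l)); auto.
    rewrite Rmult_assoc, Rinv_l by lra. rewrite Rmult_1_r.
    pose proof (sumL_abs_le l f B H). unfold sumL in H0. lra.
Qed.

Lemma Qs_spec {A} lam (X : list A) F B :
  0 <= lam -> (forall E, Rabs (F E) <= B) ->
  infinite_sum (fun P => poisson lam P * avg_list (tuples X P) F) (Qs lam X F) /\ Rabs (Qs lam X F) <= B.
Proof.
  intros Hl HF. assert (HB : 0 <= B) by (eapply Rle_trans; [apply Rabs_pos|apply (HF [])]).
  assert (Hd : forall P, Rabs (poisson lam P * avg_list (tuples X P) F) <= B * poisson lam P).
  { intros P. rewrite Rabs_mult, Rabs_right by (apply Rle_ge, poisson_nonneg; auto).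
    rewrite Rmult_comm. apply Rmult_le_compat_r; [apply poisson_nonneg; auto|].
    apply avg_bound; auto. }
  assert (Hs : infinite_sum (fun P => B * poisson lam P) (B * 1)) by (apply infinite_sum_scal, poisson_sum).
  destruct (dom_cv _ _ _ Hd Hs) as [L HL]. unfold Qs. rewrite (series_eq _ _ HL). split; auto.
  eapply Rle_trans; [apply (sum_bound _ _ _ _ Hd HL Hs)|lra].
Qed.

Lemma Qs_ext {A} lam (X : list A) F G :
  (forall P E, In E (tuples X P) -> F E = G E) -> Qs lam X F = Qs lam X G.
Proof.
  intros H. unfold Qs. f_equal. apply functional_extensionality. intros P. f_equal.
  unfold avg_list. f_equal. f_equal. apply map_ext_in. intros; apply H with P; auto.
Qed.

Lemma Qs_const {A} lam (X : list A) c : X <> [] -> Qs lam X (fun _ => c) = c.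
Proof.
  intros HX. unfold Qs. apply series_eq.
  assert (H := infinite_sum_scal _ _ c (poisson_sum lam)). rewrite Rmult_1_r in H.
  eapply infinite_sum_ext; [|exact H].
  intros P. simpl. unfold avg_list. fold (sumL (tuples X P) (fun _ => c)). rewrite sumL_const.
  pose proof (length_tuples_pos X P HX). field. apply not_0_INR. lia.
Qed.

Lemma pow_div_l x y k : y <> 0 -> (x / y) ^ k = x ^ k / y ^ k.
Proof. intros H. induction k; simpl; [field|rewrite IHk; field; split; auto; apply pow_nonzero; auto]. Qed.

Lemma TT_bound {A} (X : list A) p k l Phi B :
  (forall E1 E2, Rabs (Phi E1 E2) <= B) ->
  Rabs (TT X p k l Phi) <= INR (length (X1 X p)) ^ k * (INR (length (X2 X p)) ^ l * B).
Proof.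
  intros H. unfold TT. rewrite <- !pow_INR, <- !length_tuples.
  apply sumL_abs_le. intros E1 _. apply sumL_abs_le. intros; auto.
Qed.

Lemma thinning {A} (X : list A) (p : A -> bool) (lam B : R) (Phi : list A -> list A -> R) :
  0 <= lam -> (0 < length (X1 X p))%nat -> (0 < length (X2 X p))%nat ->
  (forall E1 E2, Rabs (Phi E1 E2) <= B) ->
  Qs lam X (fun E => Phi (filter p E) (filter (fun x => negb (p x)) E)) =
  Qs (lam * INR (length (X1 X p)) / INR (length X)) (X1 X p)
     (fun E1 => Qs (lam * INR (length (X2 X p)) / INR (length X)) (X2 X p) (fun E2 => Phi E1 E2)).
Proof.
  intros Hlam Hn1 Hn2 HPhi.
  assert (HB : 0 <= B) by (eapply Rle_trans; [apply Rabs_pos|apply (HPhi [] [])]).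
  assert (Hlen := length_filter_split X p). fold (X1 X p) (X2 X p) in Hlen.
  set (n1 := INR (length (X1 X p))) in *. set (n2 := INR (length (X2 X p))) in *.
  set (n := INR (length X)) in *.
  assert (Hn1' : 0 < n1) by (apply lt_0_INR; auto).
  assert (Hn2' : 0 < n2) by (apply lt_0_INR; auto).
  assert (Hn : n = n1 + n2) by (unfold n, n1, n2; rewrite Hlen, plus_INR; reflexivity).
  set (w := lam / n).
  assert (Hw : 0 <= w) by (unfold w; apply Rmult_le_pos; [auto|left; apply Rinv_0_lt_compat; lra]).
  set (a := fun k l => exp (- lam) * expt w k * expt w l * TT X p k l Phi).
  assert (Hd : forall i j, Rabs (a i j) <= (exp (- lam) * B) * expt (w * n1) i * expt (w * n2) j).
  { intros i j. unfold a. rewrite Rabs_mult.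
    rewrite (Rabs_right (exp (- lam) * expt w i * expt w j)).
    2:{ apply Rle_ge. apply Rmult_le_pos; [apply Rmult_le_pos; [left; apply exp_pos|]|]; apply expt_nonneg; auto. }
    eapply Rle_trans.
    { apply Rmult_le_compat_l; [apply Rmult_le_pos; [apply Rmult_le_pos; [left; apply exp_pos|]|]; apply expt_nonneg; auto|].
      apply TT_bound; eauto. }
    unfold expt. rewrite !Rpow_mult_distr. right. fold n1 n2. field.
    split; apply INR_fact_neq_0. }
  destruct (fubini a (exp (- lam) * B) (w * n1) (w * n2)) as [Hai Hfub]; auto.
  { apply Rmult_le_pos; [left; apply exp_pos|auto]. }
  { apply Rmult_le_pos; lra. } { apply Rmult_le_pos; lra. }
  assert (HL : Qs lam X (fun E => Phi (filter p E) (filter (fun x => negb (p x)) E)) =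
               series (fun n0 => sum_f_R0 (fun i => a i (n0 - i)%nat) n0)).
  { unfold Qs. f_equal. apply functional_extensionality. intros P.
    rewrite avg_tuples, split_sum. fold n. unfold poisson.
    replace (exp (- lam) * lam ^ P / INR (fact P) * (sum_f_R0 (fun k => bin P k * TT X p k (P - k) Phi) P / n ^ P)) with ((exp (- lam) * lam ^ P / INR (fact P) / n ^ P) * sum_f_R0 (fun k => bin P k * TT X p k (P - k) Phi) P) by (unfold Rdiv; ring).
    rewrite scal_sum. apply sum_eq. intros k Hk.
    unfold a, expt.
    assert (Hb := bin_fact P k Hk).
    assert (Hfk := INR_fact_neq_0 k). assert (Hfp := INR_fact_neq_0 (P - k)).
    assert (Hb' : bin P k = INR (fact P) / (INR (fact k) * INR (fact (P - k)))) by (rewrite <- Hb; field; split; auto).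
    rewrite Hb'. unfold w. rewrite !pow_div_l by lra.
    replace (lam ^ P) with (lam ^ k * lam ^ (P - k)) by (rewrite <- pow_add; f_equal; lia).
    replace (n ^ P) with (n ^ k * n ^ (P - k)) by (rewrite <- pow_add; f_equal; lia).
    field. repeat split; auto; try apply INR_fact_neq_0; apply pow_nonzero; lra. }
  rewrite HL. clear HL.
  unfold Qs at 1. symmetry. apply series_eq.
  eapply infinite_sum_ext; [|apply Hfub]. intros k. simpl.
  apply series_eq.
  set (lam1 := lam * n1 / n). set (lam2 := lam * n2 / n).
  assert (Hl2 : 0 <= lam2) by (unfold lam2; apply Rmult_le_pos; [apply Rmult_le_pos; lra|left; apply Rinv_0_lt_compat; lra]).
  assert (Hin : forall E1, In E1 (tuples (X1 X p) k) ->
            infinite_sum (fun l => poisson lam2 l * avg_list (tuples (X2 X p) l) (fun E2 => Phi E1 E2))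
                         (Qs lam2 (X2 X p) (fun E2 => Phi E1 E2))).
  { intros E1 _. apply (Qs_spec lam2 (X2 X p) _ B Hl2). auto. }
  pose proof (infinite_sum_sumL _ _ _ Hin) as Hs.
  pose proof (infinite_sum_scal _ _ (poisson lam1 k / n1 ^ k) Hs) as Hs2.
  rewrite avg_tuples. fold n1.
  replace (poisson lam1 k * (sumL (tuples (X1 X p) k) (fun E1 => Qs lam2 (X2 X p) (fun E2 => Phi E1 E2)) / n1 ^ k))
    with (poisson lam1 k / n1 ^ k * sumL (tuples (X1 X p) k) (fun E1 => Qs lam2 (X2 X p) (fun E2 => Phi E1 E2)))
    by (unfold Rdiv; ring).
  eapply infinite_sum_ext; [|apply Hs2]. intros l. simpl.
  rewrite (sumL_ext _ _ (fun E1 => (poisson lam2 l / n2 ^ l) * sumL (tuples (X2 X p) l) (fun E2 => Phi E1 E2))).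
  2:{ intros E1. rewrite avg_tuples. fold n2. unfold Rdiv. ring. }
  rewrite sumL_scal. unfold a, TT. fold n1.
  unfold poisson, expt, lam1, lam2, w.
  replace (exp (- lam)) with (exp (- (lam * n1 / n)) * exp (- (lam * n2 / n))).
  2:{ rewrite <- exp_plus. f_equal. rewrite Hn. field. lra. }
  rewrite !pow_div_l by lra. rewrite !Rpow_mult_distr.
  assert (Hfk := INR_fact_neq_0 k). assert (Hfl := INR_fact_neq_0 l).
  field. repeat split; auto; apply pow_nonzero; lra.
Qed.

Definition eps (b : bool) : R := if b then 1 else -1.
Definition gauge (b : bool) (s : list bool) : list bool := (if b then s else map negb s) ++ [b].
Fixpoint gaugeT (bs : list bool) (ss : list (list bool)) : list (list bool) :=
  match bs, ss with
  | b :: bs', s :: ss' => gauge b s :: gaugeT bs' ss'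
  | _, _ => []
  end.

Lemma eps_sq b : eps b * eps b = 1.
Proof. destruct b; simpl; lra. Qed.

Lemma spin_gauge_lt b s i : (i < length s)%nat -> spin (gauge b s) i = eps b * spin s i.
Proof.
  intros H. unfold spin, gauge. rewrite app_nth1 by (destruct b; rewrite ?length_map; auto).
  destruct b; simpl; [lra|].
  rewrite (nth_indep _ false (negb true)) by (rewrite length_map; auto).
  rewrite map_nth. destruct (nth i s true) eqn:E1; rewrite (nth_indep _ false true) by auto; rewrite E1; simpl; lra.
Qed.

Lemma spin_gauge_N b s : spin (gauge b s) (length s) = eps b.
Proof.
  unfold spin, gauge. rewrite app_nth2 by (destruct b; rewrite ?length_map; auto).
  replace (length s - length (if b then s else map negb s))%nat with 0%nat by (destruct b; rewrite ?length_map; lia).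
  destruct b; reflexivity.
Qed.

Lemma length_gauge b s : length (gauge b s) = S (length s).
Proof. unfold gauge. rewrite length_app. destruct b; rewrite ?length_map; simpl; lia. Qed.

Lemma sumL_configs_gauge N f :
  sumL (configs (S N)) f = sumL (configs N) (fun s => f (gauge true s) + f (gauge false s)).
Proof.
  rewrite sumL_configs_last, !sumL_plus. f_equal.
  unfold gauge. simpl.
  rewrite <- (sumL_configs_bij N (map negb) (fun s => f (s ++ [false]))).
  - reflexivity.
  - intros s Hs. rewrite length_map, map_map. split; auto.
    erewrite map_ext; [apply map_id|]. intros []; reflexivity.
Qed.

Lemma sumL_tuples_gauge N m : forall Psi,
  sumL (tuples (configs (S N)) m) Psi =
  sumL (tuples (configs N) m) (fun ss => sumL (tuples [true; false] m) (fun bs => Psi (gaugeT bs ss))).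
Proof.
  induction m; intros Psi.
  - rewrite !sumL_tuples_0. reflexivity.
  - rewrite sumL_tuples_S.
    rewrite (sumL_ext _ _ (fun x => sumL (tuples (configs N) m) (fun ss => sumL (tuples [true; false] m) (fun bs => Psi (x :: gaugeT bs ss))))) by (intros; apply IHm).
    rewrite sumL_configs_gauge, sumL_tuples_S. apply sumL_ext; intros s.
    rewrite <- sumL_plus. apply sumL_ext; intros ss.
    rewrite sumL_tuples_S, !sumL_cons, sumL_nil. simpl. lra.
Qed.

Lemma length_gaugeT bs ss : length bs = length ss -> length (gaugeT bs ss) = length ss.
Proof. revert ss; induction bs; intros [|s ss] H; simpl in *; auto; try lia. Qed.

Lemma nth_gaugeT bs ss a : length bs = length ss -> (a < length ss)%nat ->
  nth a (gaugeT bs ss) [] = gauge (nth a bs true) (nth a ss []).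
Proof.
  revert ss a; induction bs; intros [|s ss] x H Hx; simpl in *; try lia.
  destruct x; auto. apply IHbs; lia.
Qed.

Section Edges.
Variable N : nat.
Definition isbulk (e : nat * nat) : bool := Nat.ltb (fst e) N && Nat.ltb (snd e) N.
Definition notbulk (e : nat * nat) : bool := negb (isbulk e).
Definition ismixed (e : nat * nat) : bool := negb (Nat.eqb (fst e) N && Nat.eqb (snd e) N).
Definition notmixed (e : nat * nat) : bool := negb (ismixed e).
Definition gK (e : nat * nat) : nat := if Nat.eqb (fst e) N then snd e else fst e.

Definition edgeval (s : list bool) (e : nat * nat) : R := spin s (fst e) * spin s (snd e).

Ltac epsfix := match goal with |- context [eps ?b] => match goal with |- _ = ?R => transitivity (eps b * eps b * R); [ring|rewrite eps_sq; ring] end end.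

Lemma edge_gauge b s e : length s = N -> (fst e <= N)%nat -> (snd e <= N)%nat ->
  edgeval (gauge b s) e =
  if isbulk e then edgeval s e else if ismixed e then spin s (gK e) else 1.
Proof.
  intros Hs Hi Hj. destruct e as [i j]. simpl in *. unfold edgeval, isbulk, ismixed, gK; simpl.
  destruct (Nat.ltb_spec i N); destruct (Nat.ltb_spec j N); simpl.
  - rewrite !spin_gauge_lt by lia. epsfix.
  - assert (j = N) by lia. subst j. rewrite (Nat.eqb_refl N).
    assert (Nat.eqb i N = false) by (apply Nat.eqb_neq; lia). rewrite H1. simpl.
    rewrite spin_gauge_lt by lia. rewrite <- Hs, spin_gauge_N. epsfix.
  - assert (i = N) by lia. subst i. rewrite (Nat.eqb_refl N). simpl.
    assert (Nat.eqb j N = false) by (apply Nat.eqb_neq; lia). rewrite H1. simpl.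
    rewrite (spin_gauge_lt b s j) by lia. rewrite <- Hs at 1. rewrite spin_gauge_N. epsfix.
  - assert (i = N) by lia. assert (j = N) by lia. subst. rewrite (Nat.eqb_refl (length s)). simpl.
    rewrite spin_gauge_N. apply eps_sq.
Qed.

Lemma weight_gauge beta E b s : length s = N ->
  (forall e, In e E -> (fst e <= N)%nat /\ (snd e <= N)%nat) ->
  weight beta E [] (gauge b s) =
  weight beta (filter isbulk E) (map gK (filter ismixed (filter notbulk E))) s *
  exp (beta * INR (length (filter notmixed (filter notbulk E)))).
Proof.
  intros Hs HE. unfold weight. rewrite <- exp_plus. f_equal.
  unfold ham, field. simpl (sumR (map _ [])).
  change (sumR (map (fun e => spin (gauge b s) (fst e) * spin (gauge b s) (snd e)) E)) with (sumL E (edgeval (gauge b s))).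
  change (sumR (map (fun e => spin s (fst e) * spin s (snd e)) (filter isbulk E))) with (sumL (filter isbulk E) (edgeval s)).
  change (sumR (map (fun k => spin s k) (map gK (filter ismixed (filter notbulk E))))) with (sumL (map gK (filter ismixed (filter notbulk E))) (spin s)).
  rewrite sumL_map.
  rewrite (sumL_filter E isbulk). fold notbulk.
  rewrite (sumL_filter (filter notbulk E) ismixed). fold notmixed.
  rewrite (sumL_ext_in (filter isbulk E) _ (edgeval s)).
  2:{ intros e He. apply filter_In in He. destruct He as [He Hb]. destruct (HE e He).
      rewrite edge_gauge by auto. rewrite Hb. reflexivity. }
  rewrite (sumL_ext_in (filter ismixed (filter notbulk E)) _ (fun e => spin s (gK e))).
  2:{ intros e He. apply filter_In in He. destruct He as [He Hm]. apply filter_In in He. destruct He as [He Hb].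
      destruct (HE e He). rewrite edge_gauge by auto. unfold notbulk in Hb.
      destruct (isbulk e); [discriminate|]. rewrite Hm. reflexivity. }
  rewrite (sumL_ext_in (filter notmixed (filter notbulk E)) _ (fun _ => 1)).
  2:{ intros e He. apply filter_In in He. destruct He as [He Hm]. apply filter_In in He. destruct He as [He Hb].
      destruct (HE e He). rewrite edge_gauge by auto. unfold notbulk in Hb. unfold notmixed in Hm.
      destruct (isbulk e); [discriminate|]. destruct (ismixed e); [discriminate|]. reflexivity. }
  rewrite sumL_const. ring.
Qed.
End Edges.

Lemma weight_pos beta E K s : 0 < weight beta E K s.
Proof. apply exp_pos. Qed.

Lemma Omega_den_pos N beta E K m :
  0 < sumR (map (fun ss => prodR (map (weight beta E K) ss)) (tuples (configs N) m)).
Proof.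
  change (0 < sumL (tuples (configs N) m) (fun ss => prodR (map (weight beta E K) ss))).
  apply sumL_pos.
  - intros; apply prodR_pos; intros; apply weight_pos.
  - intros H. pose proof (length_tuples_pos (configs N) m (configs_nonempty N)). rewrite H in H0; simpl in H0; lia.
Qed.

Lemma Omega_bound N beta E K m H B :
  (forall ss, Rabs (H ss) <= B) -> Rabs (Omega N beta E K m H) <= B.
Proof.
  intros HB. unfold Omega. pose proof (Omega_den_pos N beta E K m) as Hd.
  set (D := sumR _) in *.
  unfold Rdiv. rewrite Rabs_mult, Rabs_inv, (Rabs_right D) by lra.
  apply Rmult_le_reg_r with D; auto. rewrite Rmult_assoc, Rinv_l by lra. rewrite Rmult_1_r.
  change (Rabs (sumL (tuples (configs N) m) (fun ss => H ss * prodR (map (weight beta E K) ss))) <= B * D).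
  eapply Rle_trans; [apply sumL_abs|]. unfold D. change (sumR (map ?f ?l)) with (sumL l f).
  rewrite <- sumL_scal. apply sumL_le. intros ss _. rewrite Rabs_mult.
  rewrite (Rabs_right (prodR _)) by (apply Rle_ge; left; apply prodR_pos; intros; apply weight_pos).
  apply Rmult_le_compat_r; auto. left; apply prodR_pos; intros; apply weight_pos.
Qed.

Section GaugeOmega.
Variables (N : nat) (beta : R) (E : list (nat * nat)).
Hypothesis HE : forall e, In e E -> (fst e <= N)%nat /\ (snd e <= N)%nat.
Let E1 := filter (isbulk N) E.
Let K := map (gK N) (filter (ismixed N) (filter (notbulk N) E)).
Let c := exp (beta * INR (length (filter (notmixed N) (filter (notbulk N) E)))).

Lemma prod_gauge bs ss : length bs = length ss -> (forall s, In s ss -> length s = N) ->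
  prodR (map (weight beta E []) (gaugeT bs ss)) = c ^ length ss * prodR (map (weight beta E1 K) ss).
Proof.
  revert ss; induction bs; intros [|s ss] Hl Hs; simpl in *; try lia; try lra.
  rewrite IHbs by auto. rewrite weight_gauge with (N := N) by auto. fold E1 K c. ring.
Qed.

Lemma num_gauge m G H :
  (forall ss bs, In ss (tuples (configs N) m) -> In bs (tuples [true; false] m) -> G (gaugeT bs ss) = H ss) ->
  sumL (tuples (configs (S N)) m) (fun ss => G ss * prodR (map (weight beta E []) ss)) =
  (INR (2 ^ m) * c ^ m) * sumL (tuples (configs N) m) (fun ss => H ss * prodR (map (weight beta E1 K) ss)).
Proof.
  intros HG. rewrite sumL_tuples_gauge. rewrite <- sumL_scal. apply sumL_ext_in. intros ss Hss.
  rewrite (sumL_ext_in _ _ (fun _ => c ^ m * (H ss * prodR (map (weight beta E1 K) ss)))).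
  - rewrite sumL_const, length_tuples. simpl length. ring.
  - intros bs Hbs. rewrite HG by auto.
    apply In_tuples in Hss, Hbs. destruct Hss as [Hl1 Hin]. destruct Hbs as [Hl2 _].
    rewrite prod_gauge by (try lia; intros; apply In_configs; auto). rewrite Hl1. ring.
Qed.

Lemma Omega_gauge m G H :
  (forall ss bs, In ss (tuples (configs N) m) -> In bs (tuples [true; false] m) -> G (gaugeT bs ss) = H ss) ->
  Omega (S N) beta E [] m G = Omega N beta E1 K m H.
Proof.
  intros HG. unfold Omega.
  change (sumR (map (fun ss => G ss * prodR (map (weight beta E []) ss)) (tuples (configs (S N)) m)))
    with (sumL (tuples (configs (S N)) m) (fun ss => G ss * prodR (map (weight beta E []) ss))).
  change (sumR (map (fun ss => prodR (map (weight beta E []) ss)) (tuples (configs (S N)) m)))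
    with (sumL (tuples (configs (S N)) m) (fun ss => prodR (map (weight beta E []) ss))).
  rewrite num_gauge with (H := H) by auto.
  rewrite (sumL_ext _ (fun ss => prodR (map (weight beta E []) ss)) (fun ss => 1 * prodR (map (weight beta E []) ss))) by (intros; ring).
  rewrite num_gauge with (H := fun _ => 1) by auto.
  rewrite (sumL_ext _ (fun ss => 1 * prodR _) (fun ss => prodR (map (weight beta E1 K) ss))) by (intros; ring).
  pose proof (Omega_den_pos N beta E1 K m) as Hd. change (sumR (map ?f ?l)) with (sumL l f) in Hd.
  assert (0 < INR (2 ^ m) * c ^ m).
  { apply Rmult_lt_0_compat; [apply lt_0_INR; apply Nat.neq_0_lt_0, Nat.pow_nonzero; lia|apply pow_lt, exp_pos]. }
  change (sumR (map ?f ?l)) with (sumL l f). field. assert (0 < c ^ m) by apply pow_lt, exp_pos. assert (0 < INR (2 ^ m)) by (apply lt_0_INR; apply Nat.neq_0_lt_0, Nat.pow_nonzero; lia). repeat split; lra.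
Qed.
End GaugeOmega.

Lemma In_pairs M i j : In (i, j) (pairs M) <-> (i < M /\ j < M)%nat.
Proof. unfold pairs, sites. rewrite in_prod_iff, !in_seq. lia. Qed.

Lemma NoDup_prod {A B} (l : list A) (l' : list B) : NoDup l -> NoDup l' -> NoDup (list_prod l l').
Proof.
  intros Hl Hl'. induction l; simpl; [constructor|]. inversion Hl; subst. apply NoDup_app.
  - apply NoDup_map_in; auto. intros x y _ _ Hxy; inversion Hxy; auto.
  - apply IHl; auto.
  - intros x Hx Hx'. apply in_map_iff in Hx. destruct Hx as [t [<- _]].
    apply in_prod_iff in Hx'. destruct Hx'; contradiction.
Qed.

Lemma NoDup_pairs M : NoDup (pairs M).
Proof. apply NoDup_prod; apply seq_NoDup. Qed.

Lemma length_pairs M : length (pairs M) = (M * M)%nat.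
Proof. unfold pairs, sites. rewrite length_prod, length_seq. auto. Qed.

Lemma perm_bulk N : Permutation (filter (isbulk N) (pairs (S N))) (pairs N).
Proof.
  apply NoDup_Permutation; [apply NoDup_filter, NoDup_pairs|apply NoDup_pairs|].
  intros [i j]. rewrite filter_In, !In_pairs. unfold isbulk; simpl.
  rewrite Bool.andb_true_iff, !Nat.ltb_lt. lia.
Qed.

Definition mixlist N := map (fun i => (i, N)) (seq 0 N) ++ map (fun j => (N, j)) (seq 0 N).

Lemma perm_mixed N : Permutation (filter (ismixed N) (filter (notbulk N) (pairs (S N)))) (mixlist N).
Proof.
  apply NoDup_Permutation; [apply NoDup_filter, NoDup_filter, NoDup_pairs| |].
  - unfold mixlist. apply NoDup_app.
    + apply NoDup_map_in; [apply seq_NoDup|]. intros x y _ _ H; inversion H; auto.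
    + apply NoDup_map_in; [apply seq_NoDup|]. intros x y _ _ H; inversion H; auto.
    + intros x H1 H2. apply in_map_iff in H1, H2. destruct H1 as [i [<- Hi]]. destruct H2 as [j [Hj _]].
      inversion Hj; subst. apply in_seq in Hi. lia.
  - intros [i j]. rewrite !filter_In, In_pairs. unfold mixlist. rewrite in_app_iff, !in_map_iff.
    unfold notbulk, isbulk, ismixed; simpl. split.
    + intros [[[Hi Hj] Hb] Hm].
      destruct (Nat.ltb_spec i N); destruct (Nat.ltb_spec j N); simpl in Hb; try discriminate.
      * left. exists i. split; [f_equal; lia|apply in_seq; lia].
      * right. exists j. split; [f_equal; lia|apply in_seq; lia].
      * assert (i = N) by lia. assert (j = N) by lia. subst. rewrite Nat.eqb_refl in Hm. discriminate.
    + intros [[k [Hk Hin]]|[k [Hk Hin]]]; injection Hk; intros; subst i j; apply in_seq in Hin.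
      * assert (Nat.ltb N N = false) by (apply Nat.ltb_ge; lia).
        assert (Nat.eqb k N = false) by (apply Nat.eqb_neq; lia).
        rewrite H, H0, ?Bool.andb_false_r. simpl. repeat split; lia.
      * assert (Nat.ltb N N = false) by (apply Nat.ltb_ge; lia).
        assert (Nat.eqb k N = false) by (apply Nat.eqb_neq; lia).
        rewrite H, H0, ?Bool.andb_false_r. simpl. rewrite ?Bool.andb_false_r. simpl. repeat split; lia.
Qed.

Lemma perm_self N : Permutation (filter (notmixed N) (filter (notbulk N) (pairs (S N)))) [(N, N)].
Proof.
  apply NoDup_Permutation; [apply NoDup_filter, NoDup_filter, NoDup_pairs|repeat constructor; intros []|].
  intros [i j]. rewrite !filter_In, In_pairs. unfold notmixed, notbulk, isbulk, ismixed; simpl.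
  rewrite Bool.negb_involutive. split.
  - intros [[[Hi Hj] Hb] Hm]. apply Bool.andb_true_iff in Hm. destruct Hm as [H1 H2].
    apply Nat.eqb_eq in H1, H2. subst. left; auto.
  - intros [H|[]]. inversion H; subst. rewrite Nat.eqb_refl, Nat.ltb_irrefl. simpl. repeat split; lia.
Qed.

Lemma map_gK_mixlist N : map (gK N) (mixlist N) = sites N ++ sites N.
Proof.
  unfold mixlist, sites. rewrite map_app, !map_map. f_equal.
  - rewrite <- (map_id (seq 0 N)) at 2. apply map_ext_in. intros i Hi. apply in_seq in Hi.
    unfold gK; simpl. assert (Nat.eqb i N = false) by (apply Nat.eqb_neq; lia). rewrite H; auto.
  - rewrite <- (map_id (seq 0 N)) at 2. apply map_ext_in. intros j Hj. unfold gK; simpl. rewrite Nat.eqb_refl; auto.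
Qed.

Lemma Qs_perm {A} lam (X Y : list A) F : Permutation X Y -> Qs lam X F = Qs lam Y F.
Proof.
  intros HP. unfold Qs. f_equal. apply functional_extensionality. intros P. f_equal.
  rewrite !avg_tuples. rewrite (Permutation_length HP). f_equal. apply sumL_tuples_perm; auto.
Qed.

Lemma Qs_map_double {A B} lam (X : list A) (Y : list B) (g : A -> B) F :
  Permutation (map g X) (Y ++ Y) -> Y <> [] ->
  Qs lam X (fun E => F (map g E)) = Qs lam Y F.
Proof.
  intros HP HY. unfold Qs. f_equal. apply functional_extensionality. intros P. f_equal.
  rewrite !avg_tuples. rewrite <- sumL_tuples_map. rewrite (sumL_tuples_perm _ _ _ _ HP).
  rewrite sumL_tuples_double.
  assert (length X = 2 * length Y)%nat.
  { rewrite <- (length_map g X), (Permutation_length HP), length_app. lia. }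
  rewrite H, mult_INR. simpl (INR 2). rewrite Rpow_mult_distr.
  assert (0 < INR (length Y)) by (apply lt_0_INR; destruct Y; [congruence|simpl; lia]).
  replace (1 + 1) with 2 by lra. assert (2 ^ P <> 0) by (apply pow_nonzero; lra). assert (INR (length Y) ^ P <> 0) by (apply pow_nonzero; lra). field; auto.
Qed.

Lemma sites_nonempty N : (1 <= N)%nat -> sites N <> [].
Proof. intros H. unfold sites. destruct N; [lia|simpl; discriminate]. Qed.

Theorem gauge_main N m alpha beta G H B :
  (1 <= N)%nat -> 0 <= alpha -> (forall ss, Rabs (H ss) <= B) ->
  (forall ss bs, In ss (tuples (configs N) m) -> In bs (tuples [true; false] m) -> G (gaugeT bs ss) = H ss) ->
  qexp_bulk (S N) alpha (fun E => Omega (S N) beta E [] m G) = qexp_t N alpha 1 (fun E K => Omega N beta E K m H).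
Proof.
  intros HN Ha HB HG.
  set (Phi := fun E1 E2 => Omega N beta E1 (map (gK N) (filter (ismixed N) E2)) m H).
  change (qexp_bulk (S N) alpha (fun E => Omega (S N) beta E [] m G)) with
    (Qs (alpha * INR (S N)) (pairs (S N)) (fun E => Omega (S N) beta E [] m G)).
  rewrite (Qs_ext _ _ _ (fun E => Phi (filter (isbulk N) E) (filter (fun x => negb (isbulk N x)) E))).
  2:{ intros P E HE. unfold Phi. apply Omega_gauge; auto.
      intros e He. apply In_tuples in HE. destruct HE as [_ HE]. apply HE in He.
      destruct e as [i j]. apply In_pairs in He. simpl; lia. }
  assert (HPhi : forall E1 E2, Rabs (Phi E1 E2) <= B) by (intros; apply Omega_bound; auto).
  assert (Hlam : 0 <= alpha * INR (S N)) by (apply Rmult_le_pos; auto; apply pos_INR).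
  pose proof (perm_bulk N) as Pb. pose proof (perm_mixed N) as Pm. pose proof (perm_self N) as Ps.
  assert (L1 : length (X1 (pairs (S N)) (isbulk N)) = (N * N)%nat) by (unfold X1; rewrite (Permutation_length Pb); apply length_pairs).
  assert (L2 : length (X2 (pairs (S N)) (isbulk N)) = (2 * N + 1)%nat).
  { pose proof (length_filter_split (pairs (S N)) (isbulk N)) as Hs. fold (X1 (pairs (S N)) (isbulk N)) (X2 (pairs (S N)) (isbulk N)) in Hs.
    rewrite length_pairs, L1 in Hs. lia. }
  rewrite thinning with (B := B); auto; try (rewrite ?L1, ?L2; nia).
  set (X2b := X2 (pairs (S N)) (isbulk N)).
  set (lam2 := alpha * INR (S N) * INR (length X2b) / INR (length (pairs (S N)))).
  assert (Hlam2 : 0 <= lam2).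
  { unfold lam2. apply Rmult_le_pos; [apply Rmult_le_pos; auto; apply pos_INR|left; apply Rinv_0_lt_compat].
    rewrite length_pairs. apply lt_0_INR. lia. }
  assert (Pm' : Permutation (X1 X2b (ismixed N)) (mixlist N)) by exact Pm.
  assert (Ps' : Permutation (X2 X2b (ismixed N)) [(N, N)]) by exact Ps.
  assert (L21 : length (X1 X2b (ismixed N)) = (2 * N)%nat).
  { rewrite (Permutation_length Pm'). unfold mixlist. rewrite length_app, !length_map, length_seq. lia. }
  assert (L22 : length (X2 X2b (ismixed N)) = 1%nat).
  { rewrite (Permutation_length Ps'). auto. }
  assert (Hinner : forall E1, Qs lam2 X2b (fun E2 => Phi E1 E2) =
     Qs (lam2 * INR (2 * N) / INR (2 * N + 1)) (sites N) (fun K => Omega N beta E1 K m H)).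
  { intros E1.
    assert (Ht := thinning X2b (ismixed N) lam2 B (fun A B0 => Omega N beta E1 (map (gK N) A) m H) Hlam2
      ltac:(rewrite L21; lia) ltac:(rewrite L22; lia) ltac:(intros; apply Omega_bound; auto)).
    etransitivity; [apply Ht|]. clear Ht.
    assert (L2b : length X2b = (2 * N + 1)%nat) by exact L2. rewrite L21, L2b.
    rewrite (Qs_ext _ _ _ (fun A => Omega N beta E1 (map (gK N) A) m H)).
    2:{ intros P A _. apply Qs_const. intros Hc. rewrite Hc in L22. discriminate. }
    apply (Qs_map_double _ _ _ (gK N) (fun K => Omega N beta E1 K m H)); [|apply sites_nonempty; auto].
    rewrite <- map_gK_mixlist. apply Permutation_map. apply Pm'. }
  rewrite (Qs_ext _ _ _ (fun E1 => Qs (lam2 * INR (2 * N) / INR (2 * N + 1)) (sites N) (fun K => Omega N beta E1 K m H)))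
    by (intros; apply Hinner).
  rewrite (Qs_perm _ _ (pairs N)) by apply Pb.
  unfold qexp_t. fold (Qs (tilde_alpha N alpha * INR N) (pairs N) (fun E => series (fun P' => poisson (2 * tilde_alpha N alpha * 1) P' * avg_list (tuples (sites N) P') (fun K => Omega N beta E K m H)))).
  rewrite L1.
  replace (alpha * INR (S N) * INR (N * N) / INR (length (pairs (S N)))) with (tilde_alpha N alpha * INR N).
  2:{ unfold tilde_alpha. rewrite length_pairs, !mult_INR.
      replace (INR (S N)) with (INR N + 1) by (rewrite S_INR; auto).
      replace (INR (N + 1)) with (INR N + 1) by (rewrite plus_INR; simpl; lra).
      field. pose proof (pos_INR N). lra. }
  replace (lam2 * INR (2 * N) / INR (2 * N + 1)) with (2 * tilde_alpha N alpha * 1).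
  2:{ unfold lam2, tilde_alpha, X2b. rewrite L2, length_pairs, !mult_INR, !plus_INR.
      replace (INR (S N)) with (INR N + 1) by (rewrite S_INR; auto).
      simpl (INR 2). simpl (INR 1).
      field. pose proof (pos_INR N). pose proof (pos_INR (2 * N)). lra. }
  reflexivity.
Qed.

Lemma sumL_tuples_1 {A} (X : list A) F : sumL (tuples X 1) F = sumL X (fun x => F [x]).
Proof. rewrite sumL_tuples_S. apply sumL_ext; intros. rewrite sumL_tuples_0; reflexivity. Qed.

Lemma omega_Omega M beta E K g :
  omega M beta E K g = Omega M beta E K 1 (fun ss => g (nth 0 ss [])).
Proof.
  unfold omega, Omega.
  change (sumR (map ?f ?l)) with (sumL l f). rewrite !sumL_tuples_1. simpl.
  f_equal; apply sumL_ext; intros; ring.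
Qed.

Lemma spin_abs s i : Rabs (spin s i) = 1.
Proof. unfold spin. destruct (nth i s false); [apply Rabs_R1|rewrite Rabs_left by lra; lra]. Qed.

Lemma spin_mono_abs s idx : Rabs (spin_mono s idx) <= 1.
Proof. unfold spin_mono. apply prodR_abs_le1. intros; rewrite spin_abs; lra. Qed.

Lemma spin_mono_gauge b s idx : Forall (fun i => (i < length s)%nat) idx ->
  spin_mono (gauge b s) idx = eps b ^ length idx * spin_mono s idx.
Proof.
  induction idx; intros Hf; simpl; [unfold spin_mono; simpl; ring|].
  inversion Hf; subst. unfold spin_mono in *. simpl. rewrite IHidx by auto.
  rewrite spin_gauge_lt by auto. ring.
Qed.

Lemma eps_pow2 b n : eps b ^ n * eps b ^ n = 1.
Proof. rewrite <- Rpow_mult_distr, eps_sq. apply pow1. Qed.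

Theorem part1 (alpha beta : R) (halpha : 0 <= alpha) :
  forall n : nat, (1 <= n)%nat ->
   exists C : R, forall (N : nat) (idx : list nat),
     (1 <= N)%nat -> length idx = n -> Forall (fun i => (i < N)%nat) idx ->
     Rabs (qexp_t N alpha 1 (fun E K => omega N beta E K (fun s => spin_mono s idx))
           - qexp_bulk (N + 1) alpha
               (fun E => omega (N + 1) beta E [] (fun s => spin_mono s idx * spin s N ^ n)))
     <= C / INR N.
Proof.
  intros n Hn. exists 0. intros N idx HN Hl Hf.
  rewrite Nat.add_1_r.
  assert (E1 : (fun E K => omega N beta E K (fun s => spin_mono s idx)) =
               (fun E K => Omega N beta E K 1 (fun ss => spin_mono (nth 0 ss []) idx)))
    by (do 2 (apply functional_extensionality; intro); apply omega_Omega).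
  assert (E2 : (fun E => omega (S N) beta E [] (fun s => spin_mono s idx * spin s N ^ n)) =
               (fun E => Omega (S N) beta E [] 1 (fun ss => spin_mono (nth 0 ss []) idx * spin (nth 0 ss []) N ^ n)))
    by (apply functional_extensionality; intro; apply omega_Omega).
  rewrite E1, E2.
  rewrite (gauge_main N 1 alpha beta _ (fun ss => spin_mono (nth 0 ss []) idx) 1); auto.
  - unfold Rminus. rewrite Rplus_opp_r, Rabs_R0. unfold Rdiv. lra.
  - intros; apply spin_mono_abs.
  - intros ss bs Hss Hbs. apply In_tuples in Hss, Hbs. destruct Hss as [L1 Hs]. destruct Hbs as [L2 _].
    destruct ss as [|s [|]]; try discriminate. destruct bs as [|b [|]]; try discriminate.
    simpl. assert (Hls : length s = N) by (apply In_configs, Hs; left; auto).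
    rewrite spin_mono_gauge by (rewrite Hls; auto). replace N with (length s) by auto. rewrite spin_gauge_N, Hl.
    transitivity ((eps b ^ n * eps b ^ n) * spin_mono s idx); [ring|rewrite eps_pow2; ring].
Qed.

Lemma overlap_abs M A ss : Rabs (overlap M A ss) <= 1.
Proof.
  unfold overlap. change (sumR (map ?f ?l)) with (sumL l f).
  destruct M.
  - simpl. rewrite Rinv_0, Rmult_0_l, Rabs_R0. lra.
  - rewrite Rabs_mult. assert (HM : 0 < INR (S M)) by (apply lt_0_INR; lia).
    rewrite Rabs_right by (apply Rle_ge; left; apply Rinv_0_lt_compat; auto).
    apply Rmult_le_reg_l with (INR (S M)); auto. rewrite <- Rmult_assoc, Rinv_r by lra. rewrite Rmult_1_l, Rmult_1_r.
    replace (INR (S M)) with (INR (length (sites (S M))) * 1) by (unfold sites; rewrite length_seq; ring).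
    apply sumL_abs_le. intros; apply prodR_abs_le1. intros; rewrite spin_abs; lra.
Qed.

Lemma mono_val_abs M mono ss : Rabs (mono_val M mono ss) <= 1.
Proof. unfold mono_val. apply prodR_abs_le1. intros; apply overlap_abs. Qed.

Lemma prodR_app (l1 l2 : list R) : prodR (l1 ++ l2) = prodR l1 * prodR l2.
Proof. induction l1; simpl; [ring|rewrite IHl1; ring]. Qed.

Lemma prodR_ones {A} (l : list A) : prodR (map (fun _ => 1) l) = 1.
Proof. induction l; simpl; [ring|rewrite IHl; ring]. Qed.

Lemma prod_indicator (l : list nat) x y : NoDup l -> In x l ->
  prodR (map (fun a => if Nat.eq_dec x a then y else 1) l) = y.
Proof.
  induction l; intros Hn Hi; [destruct Hi|]. inversion Hn; subst. simpl.
  destruct (Nat.eq_dec x a).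
  - subst. transitivity (y * prodR (map (fun _ => 1) l)).
    + f_equal. apply prodR_ext_in. intros z Hz. destruct (Nat.eq_dec a z); [subst; contradiction|auto].
    + rewrite prodR_ones. ring.
  - destruct Hi; [congruence|]. rewrite IHl; auto. ring.
Qed.

Lemma prod_count (f : nat -> R) m (A : list nat) : Forall (fun a => (a < m)%nat) A ->
  prodR (map f A) = prodR (map (fun a => f a ^ count_occ Nat.eq_dec A a) (seq 0 m)).
Proof.
  induction A; intros HA; simpl.
  - transitivity (prodR (map (fun (_ : nat) => 1) (seq 0 m))); [rewrite prodR_ones; auto|].
    apply prodR_ext_in. intros; simpl; ring.
  - inversion HA; subst. rewrite IHA by auto.
    rewrite (prodR_ext_in _ (fun a0 => f a0 ^ (if Nat.eq_dec a a0 then S (count_occ Nat.eq_dec A a0) else count_occ Nat.eq_dec A a0))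
             (fun a0 => (if Nat.eq_dec a a0 then f a0 else 1) * f a0 ^ count_occ Nat.eq_dec A a0)).
    + rewrite prodR_mult. rewrite (prodR_ext_in _ (fun a0 => if Nat.eq_dec a a0 then f a0 else 1) (fun a0 => if Nat.eq_dec a a0 then f a else 1)).
      * rewrite prod_indicator; [ring|apply seq_NoDup|apply in_seq; lia].
      * intros z _. destruct (Nat.eq_dec a z); subst; auto.
    + intros z _. destruct (Nat.eq_dec a z); simpl; ring.
Qed.

Lemma occ_cons a A mono : occ a (A :: mono) = (count_occ Nat.eq_dec A a + occ a mono)%nat.
Proof. reflexivity. Qed.

Lemma prod_mono_occ (f : nat -> R) m mono : valid_mono m mono ->
  prodR (map (fun A => prodR (map f A)) mono) = prodR (map (fun a => f a ^ occ a mono) (seq 0 m)).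
Proof.
  induction mono; intros Hv; simpl.
  - transitivity (prodR (map (fun (_ : nat) => 1) (seq 0 m))); [rewrite prodR_ones; auto|].
    apply prodR_ext_in. intros; simpl; ring.
  - inversion Hv; subst. destruct H1 as [_ [_ Ha]].
    rewrite IHmono by auto. rewrite (prod_count f m a) by auto. rewrite <- prodR_mult.
    apply prodR_ext_in. intros z _. rewrite occ_cons, pow_add. ring.
Qed.

Lemma prod_filter (f : nat -> R) (p : nat -> bool) l :
  prodR (map f (filter p l)) = prodR (map (fun a => if p a then f a else 1) l).
Proof. induction l; simpl; auto. destruct (p a); simpl; rewrite IHl; ring. Qed.

Lemma sign_cancel (f : nat -> R) m mono : valid_mono m mono ->
  (forall a, f a * f a = 1) ->
  prodR (map (fun A => prodR (map f A)) mono) * prodR (map f (odd_set m mono)) = 1.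
Proof.
  intros Hv Hf. rewrite prod_mono_occ with (m := m) by auto. unfold odd_set. rewrite prod_filter.
  rewrite <- prodR_mult. rewrite (prodR_ext_in _ _ (fun _ => 1)).
  - clear. generalize (seq 0 m). induction l; simpl; [ring|rewrite IHl; ring].
  - intros a _. destruct (Nat.Even_or_Odd (occ a mono)) as [[k Hk]|[k Hk]].
    + assert (Nat.odd (occ a mono) = false).
      { rewrite <- Nat.negb_even. rewrite (proj2 (Nat.even_spec _)); auto. exists k; auto. }
      rewrite H, Hk, pow_mult. replace (f a ^ 2) with 1 by (simpl; rewrite Rmult_1_r; auto). rewrite pow1. ring.
    + assert (Nat.odd (occ a mono) = true) by (apply Nat.odd_spec; exists k; auto).
      rewrite H, Hk. rewrite pow_add, pow_mult. replace (f a ^ 2) with 1 by (simpl; rewrite Rmult_1_r; auto). rewrite pow1. simpl. rewrite Rmult_1_r, Rmult_1_l. apply Hf.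
Qed.

Lemma overlap_gauge N A bs ss :
  length bs = length ss -> (forall s, In s ss -> length s = N) -> Forall (fun a => (a < length ss)%nat) A ->
  overlap N A (gaugeT bs ss) = prodR (map (fun a => eps (nth a bs true)) A) * overlap N A ss.
Proof.
  intros Hl Hs HA. unfold overlap. change (sumR (map ?f ?l)) with (sumL l f).
  rewrite (sumL_ext_in _ _ (fun i => prodR (map (fun a => eps (nth a bs true)) A) * prodR (map (fun a => spin (nth a ss []) i) A))).
  - rewrite sumL_scal. ring.
  - intros i Hi. unfold sites in Hi. apply in_seq in Hi.
    rewrite <- prodR_mult. apply prodR_ext_in. intros a Ha.
    rewrite Forall_forall in HA. specialize (HA a Ha).
    rewrite nth_gaugeT by auto. apply spin_gauge_lt.
    rewrite Hs by (apply nth_In; auto). lia.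
Qed.

Lemma mono_gauge_invariant N m mono bs ss :
  valid_mono m mono -> length bs = m -> length ss = m -> (forall s, In s ss -> length s = N) ->
  mono_val N mono (gaugeT bs ss) * prodR (map (fun a => spin (nth a (gaugeT bs ss) []) N) (odd_set m mono)) =
  mono_val N mono ss.
Proof.
  intros Hv Hbs Hss Hs.
  unfold mono_val.
  rewrite (prodR_ext_in _ _ (fun A => prodR (map (fun a => eps (nth a bs true)) A) * overlap N A ss)).
  2:{ intros A HA. apply overlap_gauge; auto; try lia. unfold valid_mono in Hv. rewrite Forall_forall in Hv.
      destruct (Hv A HA) as [_ [_ H]]. rewrite Hss. auto. }
  rewrite (prodR_ext_in (odd_set m mono) _ (fun a => eps (nth a bs true))).
  2:{ intros a Ha. unfold odd_set in Ha. apply filter_In in Ha. destruct Ha as [Ha _]. apply in_seq in Ha.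
      rewrite nth_gaugeT by lia. assert (length (nth a ss []) = N) by (apply Hs, nth_In; lia).
      rewrite <- H. apply spin_gauge_N. }
  rewrite prodR_mult.
  transitivity ((prodR (map (fun A => prodR (map (fun a => eps (nth a bs true)) A)) mono) *
    prodR (map (fun a => eps (nth a bs true)) (odd_set m mono))) * prodR (map (fun A => overlap N A ss) mono)); [ring|].
  rewrite sign_cancel with (m := m) by (auto; intros; apply eps_sq). ring.
Qed.

Lemma nth_map_lt {A B} (f : A -> B) l i d d0 : (i < length l)%nat -> nth i (map f l) d = f (nth i l d0).
Proof. revert i; induction l; intros i H; simpl in *; [lia|]. destruct i; auto. apply IHl; lia. Qed.

Section Swap.
Variables (j Np : nat).
Definition tau (i : nat) : nat := if Nat.eqb i j then Np else if Nat.eqb i Np then j else i.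
Definition swp (s : list bool) : list bool := map (fun i => nth (tau i) s false) (seq 0 (length s)).
Definition pswap (e : nat * nat) : nat * nat := (tau (fst e), tau (snd e)).

Lemma tau_invol i : tau (tau i) = i.
Proof.
  unfold tau. destruct (Nat.eqb_spec i j); destruct (Nat.eqb_spec i Np); subst;
  repeat (first [rewrite Nat.eqb_refl | match goal with |- context [Nat.eqb ?a ?b] => destruct (Nat.eqb_spec a b) end]); subst; auto; lia.
Qed.

Lemma tau_lt M i : (j < M)%nat -> (Np < M)%nat -> (i < M)%nat -> (tau i < M)%nat.
Proof. intros. unfold tau. destruct (Nat.eqb i j); [lia|destruct (Nat.eqb i Np); lia]. Qed.

Lemma tau_ge M i : (j < M)%nat -> (Np < M)%nat -> (M <= i)%nat -> tau i = i.
Proof.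
  intros. unfold tau. destruct (Nat.eqb_spec i j); [lia|]. destruct (Nat.eqb_spec i Np); [lia|auto].
Qed.

Lemma tau_Np : tau Np = j.
Proof. unfold tau. destruct (Nat.eqb_spec Np j); [auto|rewrite Nat.eqb_refl; auto]. Qed.

Lemma length_swp s : length (swp s) = length s.
Proof. unfold swp. rewrite length_map, length_seq. auto. Qed.

Lemma nth_swp s i : (j < length s)%nat -> (Np < length s)%nat -> nth i (swp s) false = nth (tau i) s false.
Proof.
  intros Hj HN. destruct (Nat.lt_ge_cases i (length s)).
  - unfold swp. rewrite nth_map_lt with (d0 := 0%nat) by (rewrite length_seq; auto).
    rewrite seq_nth by auto. simpl. reflexivity.
  - rewrite nth_overflow by (rewrite length_swp; auto). rewrite (tau_ge (length s)) by auto.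
    rewrite nth_overflow; auto.
Qed.

Lemma spin_swp s i : (j < length s)%nat -> (Np < length s)%nat -> spin (swp s) i = spin s (tau i).
Proof. intros. unfold spin. rewrite nth_swp; auto. Qed.

Lemma swp_invol s : (j < length s)%nat -> (Np < length s)%nat -> swp (swp s) = s.
Proof.
  intros Hj HN. apply nth_ext with (d := false) (d' := false).
  - rewrite !length_swp; auto.
  - intros i Hi. rewrite nth_swp by (rewrite length_swp; auto). rewrite nth_swp by auto.
    rewrite tau_invol. auto.
Qed.

Lemma weight_swp beta E s : (j < length s)%nat -> (Np < length s)%nat ->
  weight beta E [] (swp s) = weight beta (map pswap E) [] s.
Proof.
  intros. unfold weight, ham, field. f_equal. f_equal. f_equal. f_equal. rewrite map_map. f_equal.
  apply map_ext. intros e. rewrite !spin_swp by auto. reflexivity.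
Qed.

Lemma perm_pswap M : (j < M)%nat -> (Np < M)%nat -> Permutation (map pswap (pairs M)) (pairs M).
Proof.
  intros Hj HN. apply NoDup_Permutation.
  - apply NoDup_map_in; [apply NoDup_pairs|]. intros [a b] [c d] _ _ H. unfold pswap in H. simpl in H.
    inversion H. rewrite <- (tau_invol a), <- (tau_invol b), H1, H2, !tau_invol. auto.
  - apply NoDup_pairs.
  - intros [a b]. rewrite in_map_iff. split.
    + intros [[c d] [Hx Hin]]. unfold pswap in Hx. simpl in Hx. inversion Hx; subst.
      apply In_pairs in Hin. apply In_pairs. split; apply tau_lt; lia.
    + intros Hin. exists (tau a, tau b). unfold pswap; simpl. rewrite !tau_invol. split; auto.
      apply In_pairs in Hin. apply In_pairs. split; apply tau_lt; lia.
Qed.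

Lemma perm_swp_configs M : (j < M)%nat -> (Np < M)%nat -> Permutation (map swp (configs M)) (configs M).
Proof.
  intros Hj HN. apply NoDup_Permutation.
  - apply NoDup_map_in. apply NoDup_configs. intros x y Hx Hy Hxy.
    apply In_configs in Hx, Hy. rewrite <- (swp_invol x), <- (swp_invol y), Hxy by lia. auto.
  - apply NoDup_configs.
  - intros x. rewrite in_map_iff, In_configs. split.
    + intros [y [<- Hy]]. apply In_configs in Hy. rewrite length_swp; auto.
    + intros Hx. exists (swp x). split; [apply swp_invol; lia|]. apply In_configs; rewrite length_swp; auto.
Qed.

Lemma Omega_swp M beta E m Y : (j < M)%nat -> (Np < M)%nat ->
  Omega M beta E [] m (fun ss => Y (map swp ss)) = Omega M beta (map pswap E) [] m Y.
Proof.
  intros Hj HN.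
  assert (Hgen : forall Z : list (list bool) -> R,
    sumL (tuples (configs M) m) (fun ss => Z (map swp ss) * prodR (map (weight beta E []) ss)) =
    sumL (tuples (configs M) m) (fun ss => Z ss * prodR (map (weight beta (map pswap E) []) ss))).
  { intros Z.
    rewrite (sumL_ext_in _ _ (fun ss => (fun tt => Z tt * prodR (map (weight beta E []) (map swp tt))) (map swp ss))).
    2:{ intros ss Hss. simpl. f_equal. rewrite !map_map. apply (f_equal prodR). apply map_ext_in. intros s Hs.
        apply In_tuples in Hss. destruct Hss as [_ Hss]. apply Hss, In_configs in Hs. rewrite swp_invol by lia. auto. }
    rewrite <- (sumL_tuples_map swp (configs M) m (fun tt => Z tt * prodR (map (weight beta E []) (map swp tt)))). rewrite (sumL_tuples_perm _ _ _ _ (perm_swp_configs M Hj HN)).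
    apply sumL_ext_in. intros ss Hss. f_equal. rewrite map_map. f_equal. apply map_ext_in. intros s Hs.
    apply In_tuples in Hss. destruct Hss as [_ Hss]. apply Hss, In_configs in Hs. apply weight_swp; lia. }
  unfold Omega. change (sumR (map ?f ?l)) with (sumL l f).
  rewrite Hgen. f_equal.
  pose proof (Hgen (fun _ => 1)) as H1. simpl in H1.
  rewrite (sumL_ext _ (fun ss => prodR (map (weight beta E []) ss)) (fun ss => 1 * prodR (map (weight beta E []) ss))) by (intros; ring).
  rewrite H1. apply sumL_ext; intros; ring.
Qed.
End Swap.

Lemma Qs_map_perm {A} lam (X : list A) (g : A -> A) F :
  Permutation (map g X) X -> Qs lam X (fun E => F (map g E)) = Qs lam X F.
Proof.
  intros HP. unfold Qs. f_equal. apply functional_extensionality. intros P. f_equal.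
  rewrite !avg_tuples. rewrite <- sumL_tuples_map. rewrite (sumL_tuples_perm _ _ _ _ HP). auto.
Qed.

Lemma Q_swp M alpha beta m Y j Np : (j < M)%nat -> (Np < M)%nat ->
  qexp_bulk M alpha (fun E => Omega M beta E [] m (fun ss => Y (map (swp j Np) ss))) =
  qexp_bulk M alpha (fun E => Omega M beta E [] m Y).
Proof.
  intros Hj HN.
  change (qexp_bulk M alpha ?F) with (Qs (alpha * INR M) (pairs M) F).
  rewrite (Qs_ext _ _ _ (fun E => Omega M beta (map (pswap j Np) E) [] m Y)) by (intros; apply Omega_swp; auto).
  apply (Qs_map_perm _ _ _ (fun E => Omega M beta E [] m Y)). apply perm_pswap; auto.
Qed.

Lemma Omega_bound_in M beta E K m Y B :
  (forall ss, In ss (tuples (configs M) m) -> Rabs (Y ss) <= B) -> Rabs (Omega M beta E K m Y) <= B.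
Proof.
  intros HB. unfold Omega. pose proof (Omega_den_pos M beta E K m) as Hd.
  set (D := sumR _) in *.
  unfold Rdiv. rewrite Rabs_mult, Rabs_inv, (Rabs_right D) by lra.
  apply Rmult_le_reg_r with D; auto. rewrite Rmult_assoc, Rinv_l by lra. rewrite Rmult_1_r.
  change (Rabs (sumL (tuples (configs M) m) (fun ss => Y ss * prodR (map (weight beta E K) ss))) <= B * D).
  eapply Rle_trans; [apply sumL_abs|]. unfold D. change (sumR (map ?f ?l)) with (sumL l f).
  rewrite <- sumL_scal. apply sumL_le. intros ss Hss. rewrite Rabs_mult.
  rewrite (Rabs_right (prodR _)) by (apply Rle_ge; left; apply prodR_pos; intros; apply weight_pos).
  apply Rmult_le_compat_r; auto. left; apply prodR_pos; intros; apply weight_pos.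
Qed.

Lemma Omega_lin M beta E K m (J : list nat) c (Y : nat -> list (list bool) -> R) :
  Omega M beta E K m (fun ss => sumL J (fun j => c * Y j ss)) = sumL J (fun j => c * Omega M beta E K m (Y j)).
Proof.
  unfold Omega. change (sumR (map ?f ?l)) with (sumL l f).
  set (D := sumL _ (fun ss => prodR _)).
  rewrite (sumL_ext _ _ (fun ss => sumL J (fun j => c * (Y j ss * prodR (map (weight beta E K) ss))))).
  2:{ intros ss. rewrite <- sumL_scal_r. apply sumL_ext; intros; ring. }
  rewrite sumL_swap. unfold Rdiv. rewrite <- sumL_scal_r. apply sumL_ext. intros j.
  rewrite sumL_scal. ring.
Qed.

Lemma Omega_minus M beta E K m Y1 Y2 :
  Omega M beta E K m (fun ss => Y1 ss - Y2 ss) = Omega M beta E K m Y1 - Omega M beta E K m Y2.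
Proof.
  unfold Omega. change (sumR (map ?f ?l)) with (sumL l f).
  rewrite (sumL_ext _ _ (fun ss => Y1 ss * prodR (map (weight beta E K) ss) - Y2 ss * prodR (map (weight beta E K) ss))) by (intros; ring).
  rewrite sumL_minus. unfold Rdiv. ring.
Qed.

Lemma avg_lin {A} (l : list A) (J : list nat) c (F : nat -> A -> R) :
  avg_list l (fun E => sumL J (fun j => c * F j E)) = sumL J (fun j => c * avg_list l (F j)).
Proof.
  unfold avg_list. change (sumR (map ?f ?l)) with (sumL l f).
  rewrite sumL_swap. unfold Rdiv. rewrite <- sumL_scal_r. apply sumL_ext; intros. rewrite sumL_scal. ring.
Qed.

Lemma Qs_lin {A} lam (X : list A) (J : list nat) c (F : nat -> list A -> R) B :
  0 <= lam -> (forall j E, Rabs (F j E) <= B) ->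
  Qs lam X (fun E => sumL J (fun j => c * F j E)) = sumL J (fun j => c * Qs lam X (F j)).
Proof.
  intros Hl HB. unfold Qs at 1. apply series_eq.
  eapply infinite_sum_ext; [|apply (infinite_sum_sumL J (fun j P => c * (poisson lam P * avg_list (tuples X P) (F j))))].
  - intros P. simpl. rewrite avg_lin. rewrite <- sumL_scal. apply sumL_ext; intros; ring.
  - intros j _. apply infinite_sum_scal. apply (Qs_spec lam X (F j) B Hl). auto.
Qed.

Lemma Qs_diff_bound {A} lam (X : list A) F1 F2 B d :
  0 <= lam -> (forall E, Rabs (F1 E) <= B) -> (forall E, Rabs (F2 E) <= B) ->
  (forall E, Rabs (F1 E - F2 E) <= d) -> Rabs (Qs lam X F1 - Qs lam X F2) <= d.
Proof.
  intros Hl H1 H2 Hd.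
  destruct (Qs_spec lam X F1 B Hl H1) as [S1 _]. destruct (Qs_spec lam X F2 B Hl H2) as [S2 _].
  pose proof (infinite_sum_plus _ _ _ _ S1 (infinite_sum_scal _ _ (-1) S2)) as S.
  assert (Hdd : 0 <= d) by (eapply Rle_trans; [apply Rabs_pos|apply (Hd [])]).
  replace (Qs lam X F1 - Qs lam X F2) with (Qs lam X F1 + -1 * Qs lam X F2) by ring.
  eapply Rle_trans; [eapply (sum_bound _ (fun P => d * poisson lam P)); [|apply S|apply infinite_sum_scal, poisson_sum]|lra].
  intros P. simpl.
  replace (poisson lam P * avg_list (tuples X P) F1 + -1 * (poisson lam P * avg_list (tuples X P) F2))
    with (poisson lam P * avg_list (tuples X P) (fun E => F1 E - F2 E)).
  - rewrite Rabs_mult, Rabs_right by (apply Rle_ge, poisson_nonneg; auto).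
    rewrite Rmult_comm. apply Rmult_le_compat_r; [apply poisson_nonneg; auto|]. apply avg_bound; auto.
  - unfold avg_list. change (sumR (map ?f ?l)) with (sumL l f). rewrite sumL_minus. unfold Rdiv. ring.
Qed.

Definition Gf (m : nat) (mono : list (list nat)) (Np : nat) (ss : list (list bool)) : R :=
  mono_val Np mono ss * prodR (map (fun a => spin (nth a ss []) Np) (odd_set m mono)).

Lemma Gf_abs m mono Np ss : Rabs (Gf m mono Np ss) <= 1.
Proof.
  unfold Gf. rewrite Rabs_mult. pose proof (mono_val_abs Np mono ss).
  assert (Rabs (prodR (map (fun a => spin (nth a ss []) Np) (odd_set m mono))) <= 1)
    by (apply prodR_abs_le1; intros; rewrite spin_abs; lra).
  pose proof (Rabs_pos (mono_val Np mono ss)). pose proof (Rabs_pos (prodR (map (fun a => spin (nth a ss []) Np) (odd_set m mono)))).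
  nra.
Qed.

Lemma perm_tau j Np : (j < S Np)%nat -> Permutation (map (tau j Np) (sites (S Np))) (sites (S Np)).
Proof.
  intros Hj. unfold sites. apply NoDup_Permutation.
  - apply NoDup_map_in; [apply seq_NoDup|]. intros x y _ _ H.
    rewrite <- (tau_invol j Np x), <- (tau_invol j Np y), H. auto.
  - apply seq_NoDup.
  - intros x. rewrite in_map_iff, in_seq. split.
    + intros [y [<- Hy]]. apply in_seq in Hy. pose proof (tau_lt j Np (S Np) y Hj ltac:(lia) ltac:(lia)). lia.
    + intros Hx. exists (tau j Np x). rewrite tau_invol. split; auto. apply in_seq.
      pose proof (tau_lt j Np (S Np) x Hj ltac:(lia) ltac:(lia)). lia.
Qed.

Lemma sum_tau (x : nat -> R) j Np : (j < S Np)%nat ->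
  sumL (sites Np) (fun i => x (tau j Np i)) = sumL (sites (S Np)) x - x j.
Proof.
  intros Hj. rewrite <- (sumL_perm _ _ x (perm_tau j Np Hj)). rewrite sumL_map.
  unfold sites. rewrite seq_S, sumL_app, sumL_cons, sumL_nil. simpl (0 + Np)%nat. rewrite tau_Np. ring.
Qed.

Lemma overlap_swp A ss j Np :
  (j < S Np)%nat -> Forall (fun a => (a < length ss)%nat) A -> (forall s, In s ss -> length s = S Np) ->
  overlap Np A (map (swp j Np) ss) =
  / INR Np * (sumL (sites (S Np)) (fun i => prodR (map (fun a => spin (nth a ss []) i) A))
              - prodR (map (fun a => spin (nth a ss []) j) A)).
Proof.
  intros Hj HA Hs. unfold overlap. change (sumR (map ?f ?l)) with (sumL l f). f_equal.
  rewrite <- (sum_tau (fun i => prodR (map (fun a => spin (nth a ss []) i) A))) by auto.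
  apply sumL_ext. intros i. apply prodR_ext_in. intros a Ha. rewrite Forall_forall in HA. specialize (HA a Ha).
  rewrite nth_map_lt with (d0 := []) by auto.
  assert (length (nth a ss []) = S Np) by (apply Hs, nth_In; auto).
  apply spin_swp; lia.
Qed.

Lemma ov_diff T x Np : (1 <= Np)%nat -> Rabs T <= INR (S Np) -> Rabs x <= 1 ->
  Rabs (/ INR Np * (T - x) - / INR (S Np) * T) <= 2 / INR Np.
Proof.
  intros HN HT Hx. rewrite S_INR in *. assert (Hn : 1 <= INR Np) by (apply (le_INR 1); auto).
  replace (/ INR Np * (T - x) - / (INR Np + 1) * T) with (T / (INR Np * (INR Np + 1)) - x / INR Np) by (field; lra).
  eapply Rle_trans; [apply Rabs_triang|]. rewrite Rabs_Ropp.
  unfold Rdiv. rewrite !Rabs_mult, !Rabs_inv. rewrite (Rabs_right (INR Np * (INR Np + 1))) by (apply Rle_ge; nra). rewrite (Rabs_right (INR Np)) by lra.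
  replace (2 * / INR Np) with ((INR Np + 1) * / (INR Np * (INR Np + 1)) + 1 * / INR Np) by (field; lra).
  apply Rplus_le_compat; apply Rmult_le_compat_r; auto; left; apply Rinv_0_lt_compat; nra.
Qed.

Lemma fill_val M m mono ss : mono_val M (fill m mono) ss = mono_val M mono ss * overlap M (odd_set m mono) ss.
Proof. unfold mono_val, fill. rewrite map_app, prodR_app. simpl. ring. Qed.

Lemma pointwise m mono Np ss : (1 <= Np)%nat -> valid_mono m mono -> length ss = m ->
  (forall s, In s ss -> length s = S Np) ->
  Rabs (sumL (sites (S Np)) (fun j => / INR (S Np) * Gf m mono Np (map (swp j Np) ss)) - mono_val (S Np) (fill m mono) ss)
  <= 2 * INR (length mono) / INR Np.
Proof.
  intros HN Hv Hl Hs. rewrite fill_val.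
  set (O := odd_set m mono).
  set (pi := fun j => prodR (map (fun a => spin (nth a ss []) j) O)).
  assert (HO : Forall (fun a => (a < length ss)%nat) O).
  { apply Forall_forall. intros a Ha. unfold O, odd_set in Ha. apply filter_In in Ha. destruct Ha as [Ha _]. apply in_seq in Ha. lia. }
  assert (Hpi : forall j, (j < S Np)%nat -> prodR (map (fun a => spin (nth a (map (swp j Np) ss) []) Np) O) = pi j).
  { intros j Hj. unfold pi. apply prodR_ext_in. intros a Ha. rewrite Forall_forall in HO. specialize (HO a Ha).
    rewrite nth_map_lt with (d0 := []) by auto. assert (length (nth a ss []) = S Np) by (apply Hs, nth_In; auto).
    rewrite spin_swp by lia. rewrite tau_Np. auto. }
  assert (Hov : overlap (S Np) O ss = / INR (S Np) * sumL (sites (S Np)) pi) by reflexivity.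
  rewrite Hov.
  set (mv := mono_val (S Np) mono ss).
  assert (Hmv : forall j, (j < S Np)%nat -> Rabs (mono_val Np mono (map (swp j Np) ss) - mv) <= INR (length mono) * (2 / INR Np)).
  { intros j Hj. unfold mv, mono_val. rewrite <- sumL_const.
    eapply Rle_trans; [apply prodR_diff; intros; apply overlap_abs|]. apply sumL_le. intros A HA.
    assert (HA' : Forall (fun a => (a < length ss)%nat) A).
    { unfold valid_mono in Hv. rewrite Forall_forall in Hv. destruct (Hv A HA) as [_ [_ H]]. rewrite Hl; auto. }
    rewrite overlap_swp by auto. unfold overlap. change (sumR (map ?f ?l)) with (sumL l f).
    apply ov_diff; auto.
    - replace (INR (S Np)) with (INR (length (sites (S Np))) * 1) by (unfold sites; rewrite length_seq; ring).
      apply sumL_abs_le. intros; apply prodR_abs_le1; intros; rewrite spin_abs; lra.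
    - apply prodR_abs_le1; intros; rewrite spin_abs; lra. }
  rewrite (sumL_ext_in _ _ (fun j => / INR (S Np) * (mono_val Np mono (map (swp j Np) ss) * pi j))).
  2:{ intros j Hj. unfold sites in Hj. apply in_seq in Hj. unfold Gf. fold O. rewrite Hpi by lia. auto. }
  replace (sumL (sites (S Np)) (fun j => / INR (S Np) * (mono_val Np mono (map (swp j Np) ss) * pi j)) -
           mv * (/ INR (S Np) * sumL (sites (S Np)) pi))
    with (sumL (sites (S Np)) (fun j => / INR (S Np) * ((mono_val Np mono (map (swp j Np) ss) - mv) * pi j))).
  2:{ rewrite <- sumL_scal. rewrite <- sumL_scal. rewrite <- sumL_minus. apply sumL_ext; intros; ring. }
  assert (HS : 0 < INR (S Np)) by (apply lt_0_INR; lia).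
  replace (2 * INR (length mono) / INR Np) with (INR (length (sites (S Np))) * (/ INR (S Np) * (INR (length mono) * (2 / INR Np)))).
  2:{ unfold sites. rewrite length_seq. field. split; [apply not_0_INR; lia|lra]. }
  apply sumL_abs_le. intros j Hj. unfold sites in Hj. apply in_seq in Hj.
  rewrite Rabs_mult, Rabs_right by (apply Rle_ge; left; apply Rinv_0_lt_compat; auto).
  apply Rmult_le_compat_l; [left; apply Rinv_0_lt_compat; auto|].
  rewrite Rabs_mult. specialize (Hmv j ltac:(lia)).
  assert (Rabs (pi j) <= 1) by (unfold pi; apply prodR_abs_le1; intros; rewrite spin_abs; lra).
  pose proof (Rabs_pos (pi j)). pose proof (Rabs_pos (mono_val Np mono (map (swp j Np) ss) - mv)). nra.
Qed.

Lemma part2_bound (alpha beta : R) (halpha : 0 <= alpha) m mono N :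
  valid_mono m mono ->
  Rabs (qexp_t (S N) alpha 1 (fun E K => Omega (S N) beta E K m (mono_val (S N) mono))
       - qexp_bulk (S N + 1) alpha
           (fun E => Omega (S N + 1) beta E [] m (mono_val (S N + 1) (fill m mono))))
  <= 2 * INR (length mono) / INR (S N).
Proof.
  intros Hv. rewrite Nat.add_1_r. set (Np := S N). set (M := S Np).
  assert (HNp : (1 <= Np)%nat) by (unfold Np; lia).
  rewrite <- (gauge_main Np m alpha beta (Gf m mono Np) (mono_val Np mono) 1); auto.
  2:{ intros; apply mono_val_abs. }
  2:{ intros ss bs Hss Hbs. apply In_tuples in Hss, Hbs. destruct Hss as [L1 Hs]. destruct Hbs as [L2 _].
      unfold Gf. apply mono_gauge_invariant; auto. intros s Hs'. apply In_configs; auto. }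
  fold M.
  set (Gavg := fun ss => sumL (sites M) (fun j => / INR M * Gf m mono Np (map (swp j Np) ss))).
  assert (HM : 0 < INR M) by (apply lt_0_INR; unfold M; lia).
  assert (Step2 : qexp_bulk M alpha (fun E => Omega M beta E [] m (Gf m mono Np)) =
                  qexp_bulk M alpha (fun E => Omega M beta E [] m Gavg)).
  { change (qexp_bulk M alpha ?F) with (Qs (alpha * INR M) (pairs M) F).
    rewrite (Qs_ext _ _ (fun E => Omega M beta E [] m Gavg)
               (fun E => sumL (sites M) (fun j => / INR M * Omega M beta E [] m (fun ss => Gf m mono Np (map (swp j Np) ss))))).
    2:{ intros P E _. unfold Gavg. apply (Omega_lin M beta E [] m (sites M) (/ INR M) (fun j ss => Gf m mono Np (map (swp j Np) ss))). }
    rewrite (Qs_lin _ _ _ _ (fun j E => Omega M beta E [] m (fun ss => Gf m mono Np (map (swp j Np) ss))) 1).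
    - rewrite (sumL_ext_in _ _ (fun _ => / INR M * Qs (alpha * INR M) (pairs M) (fun E => Omega M beta E [] m (Gf m mono Np)))).
      + rewrite sumL_const. unfold sites. rewrite length_seq. field. lra.
      + intros j Hj. unfold sites in Hj. apply in_seq in Hj. f_equal.
        apply (Q_swp M alpha beta m (Gf m mono Np) j Np); unfold M in *; lia.
    - apply Rmult_le_pos; auto. apply pos_INR.
    - intros j E. apply Omega_bound. intros; apply Gf_abs. }
  rewrite Step2.
  change (qexp_bulk M alpha ?F) with (Qs (alpha * INR M) (pairs M) F).
  apply (Qs_diff_bound _ _ _ _ 1).
  - apply Rmult_le_pos; auto. apply pos_INR.
  - intros E. apply Omega_bound. intros ss. unfold Gavg.
    replace 1 with (INR (length (sites M)) * (/ INR M * 1)) by (unfold sites; rewrite length_seq; field; lra).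
    apply sumL_abs_le. intros j _. rewrite Rabs_mult, Rabs_right by (apply Rle_ge; left; apply Rinv_0_lt_compat; auto).
    apply Rmult_le_compat_l; [left; apply Rinv_0_lt_compat; auto|apply Gf_abs].
  - intros E. apply Omega_bound. intros; apply mono_val_abs.
  - intros E. rewrite <- Omega_minus. apply Omega_bound_in. intros ss Hss.
    apply In_tuples in Hss. destruct Hss as [Hl Hs].
    unfold Gavg, M. apply pointwise; auto. intros s Hs'. apply In_configs; auto.
Qed.

Theorem part2 (alpha beta : R) (halpha : 0 <= alpha) :
  forall (m : nat) (mono : list (list nat)),
     valid_mono m mono -> fillable m mono ->
     Un_cv (fun N =>
       qexp_t (S N) alpha 1 (fun E K => Omega (S N) beta E K m (mono_val (S N) mono))
       - qexp_bulk (S N + 1) alpha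
           (fun E => Omega (S N + 1) beta E [] m (mono_val (S N + 1) (fill m mono))))
     0.
Proof.
  intros m mono Hv _ eps He.
  set (Lm := INR (length mono)).
  assert (HL : 0 <= Lm) by apply pos_INR.
  destruct (archimed_cor1 (eps / (2 * Lm + 1))) as [K [HK HK0]].
  { apply Rdiv_lt_0_compat; lra. }
  exists K. intros n Hn. unfold Rdist. rewrite Rminus_0_r.
  eapply Rle_lt_trans; [apply part2_bound; auto|].
  assert (HKn : INR K <= INR (S n)) by (apply le_INR; lia).
  assert (HK' : 0 < INR K) by (apply lt_0_INR; lia).
  assert (/ INR (S n) <= / INR K) by (apply Rinv_le_contravar; auto).
  assert (0 < / INR (S n)) by (apply Rinv_0_lt_compat; lra).
  unfold Rdiv in *. fold Lm.
  assert (eps * / (2 * Lm + 1) * (2 * Lm + 1) = eps) by (field; lra).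
  nra.
Qed.

Theorem theorem2 (alpha beta : R) (halpha : 0 <= alpha) :
  (* part 1: omega~_{N,t=1}(s_{i1}..s_{in}) = omega_{N+1}(s_{i1}..s_{in} s_{N+1}^n) + O(1/N) *)
  (forall n : nat, (1 <= n)%nat ->
   exists C : R, forall (N : nat) (idx : list nat),
     (1 <= N)%nat -> length idx = n -> Forall (fun i => (i < N)%nat) idx ->
     Rabs (qexp_t N alpha 1 (fun E K => omega N beta E K (fun s => spin_mono s idx))
           - qexp_bulk (N + 1) alpha
               (fun E => omega (N + 1) beta E [] (fun s => spin_mono s idx * spin s N ^ n)))
     <= C / INR N)
  /\
  (* part 2: thermodynamic limit, fillable monomial at t=1 vs its filled version *)
  (forall (m : nat) (mono : list (list nat)),
     valid_mono m mono -> fillable m mono ->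
     Un_cv (fun N =>
       qexp_t (S N) alpha 1 (fun E K => Omega (S N) beta E K m (mono_val (S N) mono))
       - qexp_bulk (S N + 1) alpha
           (fun E => Omega (S N + 1) beta E [] m (mono_val (S N + 1) (fill m mono))))
     0).
Proof.
  split; [apply part1; auto|apply part2; auto].
Qed.
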